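(* Let $T$ be the rank-one cutting and stacking transformation with $C_0=I=(0,1)$, $r_n=n+2$, $h_n=5^{n(n+1)/2}$ for all $n\ge0$, and spacers chosen so that for each $n$ $$H_n=\{0\}\cup\{j\cdot5^{n(n+1)/2}:1\le j\le\lceil\sqrt n\rceil\}\cup\{5^{n(n+1)/2+i}:\lceil\sqrt n\rceil\le i\le n\}.$$ Then $T$ is of zero type: $\mu(A\cap T^kA)\to0$ as $k\to\infty$ for every measurable $A$ of finite measure.
   Context: Cutting and stacking: $C_0$ is a single level $I$; column $C_n$ of height $h_n$ is cut into $r_n$ equal-width subcolumns, $s_{n,k}\ge0$ spacers are placed above the $k$-th subcolumn ($0\le k\le r_n-1$), and subcolumns are stacked left to right to form $C_{n+1}$; $T$ maps each level to the one above. With $h_{n,k}=h_n+s_{n,k}$, $H_n=\{0\}\cup\{\sum_{k=0}^{i}h_{n,k}:0\le i<r_n-1\}$; so the prescriptions above determine $s_{n,k}$ for $k<r_n-1$, and $s_{n,r_n-1}$ is determined by $h_{n+1}=\sum_{k}h_{n,k}=5^{(n+1)(n+2)/2}$ (in particular $s_{n,r_n-1}>0$). $\mu$ is Lebesgue measure on the resulting space (infinite measure). *)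

(* Defs.v *)
From Stdlib Require Import Reals Rtopology Lra Lia Arith List ClassicalEpsilon.
Import ListNotations.
Open Scope R_scope.

Definition outer_le (A : R -> Prop) (m : R) : Prop :=
  forall eps : R, 0 < eps ->
    exists a b : nat -> R,
      (forall n, a n <= b n) /\
      (forall x, A x -> exists n, a n < x < b n) /\
      (forall N, sum_f_R0 (fun n => b n - a n) N <= m + eps).

Definition lebesgue_measurable (A : R -> Prop) : Prop :=
  forall eps : R, 0 < eps ->
    exists G : R -> Prop, open_set G /\ (forall x, A x -> G x) /\
      outer_le (fun x => G x /\ ~ A x) eps.

Definition finite_measure (A : R -> Prop) : Prop := exists M : R, outer_le A M.

(** * Rank-one cutting and stacking, realized on X = [0, +oo) *)

Section CS.
Variables (r : nat -> nat) (s : nat -> nat -> nat).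

Fixpoint width (n : nat) : R :=
  match n with O => 1 | S m => width m / INR (r m) end.

Definition spacers_before (n k : nat) : nat := list_sum (map (s n) (seq 0 k)).

(** [col n] = list of the left endpoints of the levels of C_n, bottom to top;
    level i of C_n is the interval [nth i (col n) 0, nth i (col n) 0 + width n).
    C_0 = [0,1).  C_n occupies [0, |C_n| * width n); the spacers added at stage n
    are consecutive fresh intervals of width (width (S n)) placed to the right of it. *)
Fixpoint col (n : nat) : list R :=
  match n with
  | O => [0]
  | S m =>
      let c := col m in
      flat_map (fun k =>
          map (fun a => a + INR k * width (S m)) c
       ++ map (fun t => INR (length c) * width m
                        + INR (spacers_before m k + t) * width (S m))
              (seq 0 (s m k)))
        (seq 0 (r m))
  end.

Definition level_start (n i : nat) : R := nth i (col n) 0.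

Definition T_rel (x y : R) : Prop :=
  exists n i, (S i < length (col n))%nat /\
    level_start n i <= x < level_start n i + width n /\
    y = x - level_start n i + level_start n (S i).

Definition T (x : R) : R := epsilon (inhabits 0) (fun y => T_rel x y).

Definition zero_type : Prop :=
  forall A : R -> Prop,
    (forall x, A x -> 0 <= x) ->
    lebesgue_measurable A -> finite_measure A ->
    forall eps : R, 0 < eps ->
      exists K : nat, forall k : nat, (K <= k)%nat ->
        outer_le (fun y => A y /\ exists x, A x /\ Nat.iter k T x = y) eps.

End CS.

Definition e_exp (n : nat) : nat := (n * (n + 1) / 2)%nat.
Definition hgt (n : nat) : nat := (5 ^ e_exp n)%nat.
Definition rN (n : nat) : nat := (n + 2)%nat.

Definition H_set (n m : nat) : Prop :=
  m = 0%nat \/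
  (exists j, (1 <= j <= Nat.sqrt_up n)%nat /\ m = (j * hgt n)%nat) \/
  (exists i, (Nat.sqrt_up n <= i <= n)%nat /\ m = (5 ^ (e_exp n + i))%nat).

Definition H_of (r : nat -> nat) (s : nat -> nat -> nat) (h : nat -> nat) (n m : nat) : Prop :=
  m = 0%nat \/
  exists i, (i < r n - 1)%nat /\ m = list_sum (map (fun k => h n + s n k)%nat (seq 0 (S i))).

(* Main.v *)
Require Import Defs.
From Stdlib Require Import Reals List Arith Lia Lra ZArith ClassicalEpsilon.
Import ListNotations.

Open Scope nat_scope.

Definition psum (f : nat -> nat) (k : nat) : nat := list_sum (map f (seq 0 k)).

Lemma psum_S f k : psum f (S k) = psum f k + f k.
Proof. unfold psum. rewrite seq_S, map_app, list_sum_app. simpl. lia. Qed.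

Lemma psum_0 f : psum f 0 = 0.
Proof. reflexivity. Qed.

Lemma psum_mono f a b : a <= b -> psum f a <= psum f b.
Proof. induction 1; auto. rewrite psum_S. lia. Qed.

Lemma psum_lt_le f k r : k < r -> psum f k + f k <= psum f r.
Proof. intros H. rewrite <- psum_S. apply psum_mono. lia. Qed.

Lemma psum_plus f g k : psum (fun x => f x + g x) k = psum f k + psum g k.
Proof. induction k. reflexivity. rewrite !psum_S. lia. Qed.

Lemma psum_const c k : psum (fun _ => c) k = k * c.
Proof. induction k. reflexivity. rewrite psum_S. lia. Qed.

Lemma psum_decomp f r c : c < psum f r ->
  exists k, k < r /\ psum f k <= c < psum f k + f k.
Proof.
  induction r; intros H. simpl in H. unfold psum in H; simpl in H; lia.
  rewrite psum_S in H.
  destruct (Nat.lt_ge_cases c (psum f r)) as [H1|H1].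
  - destruct (IHr H1) as [k [Hk Hk2]]. exists k. split; [lia|auto].
  - exists r. split; lia.
Qed.

Lemma psum_strict_inj f k1 k2 u1 u2 :
  u1 < f k1 -> u2 < f k2 -> psum f k1 + u1 = psum f k2 + u2 -> k1 = k2.
Proof.
  intros H1 H2 E.
  destruct (Nat.lt_trichotomy k1 k2) as [L|[L|L]]; auto.
  - pose proof (psum_lt_le f k1 k2 L). lia.
  - pose proof (psum_lt_le f k2 k1 L). lia.
Qed.

Lemma length_flat_map_seq {A} (B : nat -> list A) r :
  length (flat_map B (seq 0 r)) = psum (fun k => length (B k)) r.
Proof. rewrite length_flat_map. reflexivity. Qed.

Lemma nth_flat_map_seq {A} (B : nat -> list A) (d : A) r k j :
  k < r -> j < length (B k) ->
  nth (psum (fun k => length (B k)) k + j) (flat_map B (seq 0 r)) d = nth j (B k) d.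
Proof.
  induction r; intros Hk Hj. lia.
  rewrite seq_S, flat_map_app. simpl.
  destruct (Nat.eq_dec k r) as [->|Hne].
  - rewrite app_nth2; rewrite length_flat_map_seq; [|lia].
    replace (psum (fun k0 => length (B k0)) r + j - psum (fun k0 => length (B k0)) r) with j by lia.
    rewrite app_nil_r. reflexivity.
  - rewrite app_nth1. apply IHr; lia.
    rewrite length_flat_map_seq.
    pose proof (psum_lt_le (fun k => length (B k)) k r). lia.
Qed.

Lemma nth_map' {A B} (f : A -> B) l d d' n : n < length l -> nth n (map f l) d = f (nth n l d').
Proof. intros H. rewrite nth_indep with (d' := f d') by (rewrite length_map; auto). apply map_nth. Qed.

Section Slots.
Variable s : nat -> nat -> nat.
Hypothesis Hsum : forall n, list_sum (map (fun k => hgt n + s n k)%nat (seq 0 (rN n))) = hgt (S n).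

Fixpoint piL (m : nat) : list nat :=
  match m with
  | O => [0]
  | S m' => flat_map (fun k => map (fun q => q * rN m' + k) (piL m')
                 ++ map (fun t => length (piL m') * rN m' + spacers_before s m' k + t) (seq 0 (s m' k)))
             (seq 0 (rN m'))
  end.

Definition Pk (m k : nat) : nat := psum (fun k => hgt m + s m k) k.
Definition sb (m k : nat) : nat := psum (s m) k.

Lemma sb_eq m k : spacers_before s m k = sb m k.
Proof. reflexivity. Qed.

Lemma hgt_S m : hgt (S m) = rN m * hgt m + sb m (rN m).
Proof. rewrite <- Hsum. change (list_sum _) with (psum (fun k => hgt m + s m k) (rN m)).
  rewrite psum_plus, psum_const. unfold sb. lia. Qed.

Lemma length_piL m : length (piL m) = hgt m.
Proof.
  induction m. reflexivity.
  simpl. rewrite length_flat_map_seq.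
  rewrite <- Hsum. change (list_sum _) with (psum (fun k => hgt m + s m k) (rN m)).
  unfold psum. f_equal. apply map_ext. intros k. rewrite length_app, !length_map, length_seq. lia.
Qed.

Definition piF (m c : nat) : nat := nth c (piL m) 0.

Lemma pi_copy m k j : k < rN m -> j < hgt m ->
  piF (S m) (Pk m k + j) = piF m j * rN m + k.
Proof.
  intros Hk Hj. unfold piF. simpl.
  assert (E: Pk m k = psum (fun k => length (map (fun q => q * rN m + k) (piL m)
                 ++ map (fun t => length (piL m) * rN m + spacers_before s m k + t) (seq 0 (s m k)))) k).
  { unfold Pk, psum. f_equal. apply map_ext. intros. rewrite length_app, !length_map, length_seq, length_piL. lia. }
  rewrite E, nth_flat_map_seq; auto.
  - rewrite app_nth1 by (rewrite length_map, length_piL; lia).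
    rewrite (nth_map' _ _ _ 0) by (rewrite length_piL; lia). reflexivity.
  - rewrite length_app, length_map, length_piL. lia.
Qed.

Lemma pi_spacer m k t : k < rN m -> t < s m k ->
  piF (S m) (Pk m k + hgt m + t) = hgt m * rN m + sb m k + t.
Proof.
  intros Hk Ht. unfold piF. simpl.
  assert (E: Pk m k + hgt m + t = psum (fun k => length (map (fun q => q * rN m + k) (piL m)
                 ++ map (fun t => length (piL m) * rN m + spacers_before s m k + t) (seq 0 (s m k)))) k + (hgt m + t)).
  { unfold Pk, psum. rewrite <- Nat.add_assoc. f_equal. f_equal. apply map_ext. intros. rewrite length_app, !length_map, length_seq, length_piL. lia. }
  rewrite E, nth_flat_map_seq; auto.
  - rewrite app_nth2 by (rewrite length_map, length_piL; lia).
    rewrite length_map, length_piL.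
    replace (hgt m + t - hgt m) with t by lia.
    rewrite (nth_map' _ _ _ 0) by (rewrite length_seq; lia).
    rewrite seq_nth by lia. reflexivity.
  - rewrite length_app, !length_map, length_seq, length_piL. lia.
Qed.

Lemma Pk_S m k : Pk m (S k) = Pk m k + hgt m + s m k.
Proof. unfold Pk. rewrite psum_S. lia. Qed.

Lemma Pk_total m : Pk m (rN m) = hgt (S m).
Proof. unfold Pk. rewrite <- Hsum. reflexivity. Qed.

Lemma decomp_S m c : c < hgt (S m) ->
  exists k, k < rN m /\ ((exists j, j < hgt m /\ c = Pk m k + j) \/
                         (exists t, t < s m k /\ c = Pk m k + hgt m + t)).
Proof.
  intros H. rewrite <- Pk_total in H. unfold Pk in H.
  destruct (psum_decomp _ _ _ H) as [k [Hk [H1 H2]]].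
  exists k. split; auto. fold (Pk m k) in *.
  destruct (Nat.lt_ge_cases (c - Pk m k) (hgt m)).
  - left. exists (c - Pk m k). split; lia.
  - right. exists (c - Pk m k - hgt m). split; lia.
Qed.

Lemma Pk_mono m k1 k2 : k1 <= k2 -> Pk m k1 <= Pk m k2.
Proof. apply psum_mono. Qed.

Lemma Pk_lt m k1 k2 : k1 < k2 -> Pk m k1 + hgt m + s m k1 <= Pk m k2.
Proof. intros. rewrite <- Pk_S. apply Pk_mono. lia. Qed.

Lemma sb_S m k : sb m (S k) = sb m k + s m k.
Proof. unfold sb. rewrite psum_S. lia. Qed.

Lemma hgt_pos m : 0 < hgt m.
Proof. unfold hgt. apply Nat.neq_0_lt_0, Nat.pow_nonzero. lia. Qed.

Lemma rN_pos m : 0 < rN m.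
Proof. unfold rN. lia. Qed.

Lemma pi_bound m c : c < hgt m -> piF m c < hgt m.
Proof.
  revert c. induction m; intros c Hc.
  - unfold hgt, e_exp in *. simpl in *. unfold piF. simpl. destruct c; simpl; lia.
  - destruct (decomp_S m c Hc) as [k [Hk [[j [Hj ->]]|[t [Ht ->]]]]].
    + rewrite pi_copy by auto. specialize (IHm j Hj). rewrite hgt_S. nia.
    + rewrite pi_spacer by auto. rewrite hgt_S.
      pose proof (psum_lt_le (s m) k (rN m) Hk). unfold sb. lia.
Qed.

Lemma mul_add_inj q1 q2 k1 k2 r : k1 < r -> k2 < r -> q1 * r + k1 = q2 * r + k2 -> q1 = q2 /\ k1 = k2.
Proof.
  intros H1 H2 E.
  destruct (Nat.lt_trichotomy q1 q2) as [L|[L|L]].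
  - assert (q1 * r + r <= q2 * r) by nia. lia.
  - subst. lia.
  - assert (q2 * r + r <= q1 * r) by nia. lia.
Qed.

Lemma pi_inj m c1 c2 : c1 < hgt m -> c2 < hgt m -> piF m c1 = piF m c2 -> c1 = c2.
Proof.
  revert c1 c2. induction m; intros c1 c2 H1 H2 E.
  - unfold hgt, e_exp in *. simpl in *. lia.
  - destruct (decomp_S m c1 H1) as [k1 [Hk1 [[j1 [Hj1 ->]]|[t1 [Ht1 ->]]]]];
    destruct (decomp_S m c2 H2) as [k2 [Hk2 [[j2 [Hj2 ->]]|[t2 [Ht2 ->]]]]].
    + rewrite !pi_copy in E by auto. apply mul_add_inj in E; try lia. destruct E as [E1 ->].
      rewrite (IHm j1 j2); auto.
    + rewrite pi_copy, pi_spacer in E by auto. pose proof (pi_bound m j1 Hj1). nia.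
    + rewrite pi_copy, pi_spacer in E by auto. pose proof (pi_bound m j2 Hj2). nia.
    + rewrite !pi_spacer in E by auto.
      assert (k1 = k2). { apply (psum_strict_inj (s m) k1 k2 t1 t2); auto. unfold sb in E. lia. }
      subst. assert (t1 = t2) by lia. subst. reflexivity.
Qed.

Lemma pi_surj m q : q < hgt m -> exists c, c < hgt m /\ piF m c = q.
Proof.
  revert q. induction m; intros q Hq.
  - unfold hgt, e_exp in *; simpl in *. exists 0. split. lia. unfold piF; simpl. lia.
  - rewrite hgt_S in Hq.
    destruct (Nat.lt_ge_cases q (hgt m * rN m)) as [L|L].
    + pose proof (rN_pos m).
      destruct (IHm (q / rN m)) as [j [Hj Ej]].
      { apply Nat.Div0.div_lt_upper_bound. lia. }
      exists (Pk m (q mod rN m) + j). split.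
      * pose proof (Nat.mod_upper_bound q (rN m) ltac:(lia)).
        pose proof (Pk_lt m (q mod rN m) (rN m) H0). rewrite Pk_total in H1. lia.
      * rewrite pi_copy; auto. rewrite Ej. rewrite Nat.mul_comm. symmetry. apply Nat.div_mod. lia.
        apply Nat.mod_upper_bound. lia.
    + assert (q - hgt m * rN m < psum (s m) (rN m)) by (unfold sb in Hq; lia).
      destruct (psum_decomp _ _ _ H) as [k [Hk [H1 H2]]].
      exists (Pk m k + hgt m + (q - hgt m * rN m - psum (s m) k)). split.
      * pose proof (Pk_lt m k (rN m) Hk). rewrite Pk_total in H0. lia.
      * rewrite pi_spacer; auto. unfold sb. lia. lia.
Qed.

End Slots.

Open Scope nat_scope.

Lemma map_flat_map' {A B C} (f : B -> C) (g : A -> list B) l :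
  map f (flat_map g l) = flat_map (fun x => map f (g x)) l.
Proof. induction l; simpl; auto. rewrite map_app, IHl. auto. Qed.

Lemma e_exp_S n : e_exp (S n) = e_exp n + S n.
Proof.
  unfold e_exp. replace (S n * (S n + 1)) with (n * (n+1) + (S n) * 2) by lia.
  rewrite Nat.div_add by lia. reflexivity.
Qed.

Lemma hgt_S5 n : hgt (S n) = hgt n * 5 ^ S n.
Proof. unfold hgt. rewrite e_exp_S, Nat.pow_add_r. reflexivity. Qed.

Lemma pow5_ge m : 2 * (m + 2) <= 5 ^ S m.
Proof. induction m. simpl. lia. rewrite Nat.pow_succ_r'. lia. Qed.

Lemma pow5_ge' m : m <= 5 ^ m.
Proof. induction m. simpl. lia. rewrite Nat.pow_succ_r'. assert (5 ^ m <> 0) by (apply Nat.pow_nonzero; lia). lia. Qed.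

Lemma slot_unique (p q : nat) (w x : R) : (0 < w)%R ->
  (INR p * w <= x < INR p * w + w)%R -> (INR q * w <= x < INR q * w + w)%R -> p = q.
Proof.
  intros Hw [H1 H2] [H3 H4].
  destruct (Nat.lt_trichotomy p q) as [L|[L|L]]; auto.
  - apply le_INR in L. rewrite S_INR in L. nra.
  - apply le_INR in L. rewrite S_INR in L. nra.
Qed.

Lemma slot_exists (N : nat) (w x : R) : (0 < w)%R -> (0 <= x)%R -> (x < INR N * w)%R ->
  exists q, q < N /\ (INR q * w <= x < INR q * w + w)%R.
Proof.
  intros Hw Hx. induction N; intros H.
  - simpl in H. lra.
  - destruct (Rlt_le_dec x (INR N * w)) as [L|L].
    + destruct (IHN L) as [q [Hq Hq2]]. exists q. split; auto.
    + exists N. split; auto. rewrite S_INR in H. lra.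
Qed.

Section Geo.
Variable s : nat -> nat -> nat.
Hypothesis Hsum : forall n, list_sum (map (fun k => hgt n + s n k)%nat (seq 0 (rN n))) = hgt (S n).
Hypothesis HH : forall n m, H_of rN s hgt n m <-> H_set n m.

Notation w m := (width rN m).
Notation ls := (level_start rN s).
Notation pi := (piF s).

Lemma width_S m : w (S m) = (w m / INR (rN m))%R.
Proof. reflexivity. Qed.

Lemma INR_rN_pos m : (0 < INR (rN m))%R.
Proof. apply lt_0_INR. unfold rN. lia. Qed.

Lemma width_pos m : (0 < w m)%R.
Proof. induction m. simpl. lra. rewrite width_S. apply Rdiv_lt_0_compat; auto. apply INR_rN_pos. Qed.

Lemma col_eq m : col rN s m = map (fun q => INR q * w m)%R (piL s m).
Proof.
  induction m. simpl. f_equal. lra.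
  simpl col. simpl piL. rewrite map_flat_map'. apply flat_map_ext. intros k.
  rewrite map_app, IHm, !map_map, length_map. f_equal.
  - apply map_ext. intros q. rewrite width_S. rewrite plus_INR, mult_INR.
    pose proof (INR_rN_pos m). field. lra.
  - apply map_ext. intros t. rewrite width_S. rewrite !plus_INR, !mult_INR.
    pose proof (INR_rN_pos m). field. lra.
Qed.

Lemma length_col m : length (col rN s m) = hgt m.
Proof. rewrite col_eq, length_map. apply length_piL; auto. Qed.

Lemma ls_eq m c : ls m c = (INR (pi m c) * w m)%R.
Proof.
  unfold level_start, piF. rewrite col_eq.
  destruct (Nat.lt_ge_cases c (length (piL s m))).
  - rewrite (nth_map' _ _ _ 0%nat) by auto. reflexivity.
  - rewrite !nth_overflow; auto. simpl; lra. rewrite length_map; auto.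
Qed.

Fixpoint Rr (m d : nat) : nat := match d with O => 1 | S d' => Rr m d' * rN (m + d') end.

Lemma Rr_pos m d : 0 < Rr m d.
Proof. induction d; simpl. lia. pose proof (rN_pos (m+d)). nia. Qed.

Lemma width_Rr m d : w m = (INR (Rr m d) * w (m + d))%R.
Proof.
  induction d. simpl. rewrite Nat.add_0_r. lra.
  rewrite IHd. simpl Rr. rewrite Nat.add_succ_r, width_S, mult_INR.
  pose proof (INR_rN_pos (m+d)). field. lra.
Qed.

Lemma hgt_ge_r m : rN m * hgt m <= hgt (S m).
Proof. rewrite (hgt_S s Hsum). lia. Qed.

Lemma hgt_ge m d : hgt m * Rr m d <= hgt (m + d).
Proof.
  induction d. simpl. rewrite Nat.add_0_r. lia.
  simpl Rr. rewrite Nat.add_succ_r. pose proof (hgt_ge_r (m+d)). nia.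
Qed.

Fixpoint Gl (m d : nat) : list (nat * nat) :=
  match d with
  | O => [(0,0)]
  | S d' => flat_map (fun k => map (fun p => (Pk s (m + d') k + fst p, snd p * rN (m + d') + k)) (Gl m d'))
                     (seq 0 (rN (m + d')))
  end.

Lemma N1 m d p : In p (Gl m d) ->
  snd p < Rr m d /\ fst p + hgt m <= hgt (m + d) /\
  forall j, j < hgt m -> pi (m + d) (fst p + j) = pi m j * Rr m d + snd p.
Proof.
  revert p. induction d; intros p Hp.
  - simpl in Hp. destruct Hp as [<-|[]]. simpl. rewrite Nat.add_0_r. repeat split; try lia.
  - simpl in Hp. apply in_flat_map in Hp. destruct Hp as [k [Hk Hp]].
    apply in_seq in Hk. apply in_map_iff in Hp. destruct Hp as [q [<- Hq]].
    destruct (IHd q Hq) as [A [B C]]. simpl fst; simpl snd. rewrite Nat.add_succ_r.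
    simpl Rr. repeat split.
    + nia.
    + pose proof (Pk_lt s (m+d) k (rN (m+d)) ltac:(lia)). rewrite (Pk_total s Hsum) in H. lia.
    + intros j Hj. rewrite <- Nat.add_assoc. rewrite (pi_copy s Hsum) by lia.
      rewrite C by auto. nia.
Qed.

Lemma N2 m d c : c < hgt (m + d) ->
  (exists p, In p (Gl m d) /\ exists j, j < hgt m /\ c = fst p + j) \/
  hgt m * Rr m d <= pi (m + d) c.
Proof.
  revert c. induction d; intros c Hc.
  - left. exists (0,0). split. simpl; auto. exists c. rewrite Nat.add_0_r in Hc. simpl. lia.
  - rewrite Nat.add_succ_r in *. simpl Rr.
    destruct (decomp_S s Hsum (m+d) c Hc) as [k [Hk [[j0 [Hj0 ->]]|[t [Ht ->]]]]].
    + destruct (IHd j0 Hj0) as [[p [Hp [j [Hj ->]]]]|L].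
      * left. exists (Pk s (m+d) k + fst p, snd p * rN (m + d) + k). split.
        -- simpl. apply in_flat_map. exists k. split. apply in_seq; lia.
           apply in_map_iff. exists p. auto.
        -- exists j. simpl. lia.
      * right. rewrite (pi_copy s Hsum) by auto. nia.
    + right. rewrite (pi_spacer s Hsum) by auto. pose proof (hgt_ge m d). nia.
Qed.

Definition inlev (n c : nat) (x : R) : Prop := c < hgt n /\ (ls n c <= x < ls n c + w n)%R.

Definition Lr (m : nat) : R := (INR (hgt m) * w m)%R.

Lemma inlev_lt_L n c x : inlev n c x -> (x < Lr n)%R.
Proof.
  intros [Hc [H1 H2]]. rewrite ls_eq in *. unfold Lr.
  pose proof (pi_bound s Hsum n c Hc). apply le_INR in H. rewrite S_INR in H.
  pose proof (width_pos n). nra.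
Qed.

Lemma inlev_nonneg n c x : inlev n c x -> (0 <= x)%R.
Proof. intros [Hc [H1 H2]]. rewrite ls_eq in *. pose proof (pos_INR (pi n c)). pose proof (width_pos n). nra. Qed.

Lemma level_in_copy m d p j x : In p (Gl m d) -> j < hgt m -> inlev (m + d) (fst p + j) x -> inlev m j x.
Proof.
  intros Hp Hj [Hc [H1 H2]]. destruct (N1 m d p Hp) as [A [B C]].
  split; auto. rewrite !ls_eq in *. rewrite C in * by auto.
  rewrite (width_Rr m d). rewrite plus_INR, mult_INR in *.
  apply le_INR in A. rewrite S_INR in A. pose proof (width_pos (m+d)). pose proof (pos_INR (snd p)).
  split; nra.
Qed.

Lemma outside_ge m d c x : hgt m * Rr m d <= pi (m + d) c -> inlev (m + d) c x -> (Lr m <= x)%R.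
Proof.
  intros H [Hc [H1 H2]]. rewrite ls_eq in *. unfold Lr. rewrite (width_Rr m d).
  apply le_INR in H. rewrite mult_INR in H. pose proof (width_pos (m+d)). nra.
Qed.

Lemma inlev_unique n i j x : inlev n i x -> inlev n j x -> i = j.
Proof.
  intros [Hi [H1 H2]] [Hj [H3 H4]]. rewrite !ls_eq in *.
  apply (pi_inj s Hsum n); auto. apply (slot_unique _ _ (w n) x); auto. apply width_pos.
Qed.

Lemma T_rel_aux n d i i' x y1 y2 :
  S i < hgt n -> inlev n i x -> y1 = (x - ls n i + ls n (S i))%R ->
  S i' < hgt (n + d) -> inlev (n + d) i' x -> y2 = (x - ls (n+d) i' + ls (n+d) (S i'))%R -> y1 = y2.
Proof.
  intros Hi Hx E1 Hi' Hx' E2.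
  destruct (N2 n d i' ltac:(lia)) as [[p [Hp [j [Hj ->]]]]|L].
  - pose proof (level_in_copy n d p j x Hp Hj Hx') as Hx2.
    pose proof (inlev_unique n i j x Hx Hx2). subst j.
    destruct (N1 n d p Hp) as [A [B C]].
    subst. replace (S (fst p + i)) with (fst p + S i) by lia.
    rewrite !ls_eq. rewrite !C by lia. rewrite (width_Rr n d). rewrite !plus_INR, !mult_INR. ring.
  - pose proof (outside_ge n d i' x L Hx'). pose proof (inlev_lt_L n i x Hx). lra.
Qed.

Lemma T_rel_unique x y1 y2 : T_rel rN s x y1 -> T_rel rN s x y2 -> y1 = y2.
Proof.
  intros [n [i [Hi [Hx E1]]]] [n' [i' [Hi' [Hx' E2]]]].
  rewrite length_col in Hi, Hi'.
  destruct (Nat.le_ge_cases n n') as [L|L].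
  - replace n' with (n + (n' - n)) in * by lia.
    apply (T_rel_aux n (n'-n) i i' x); auto; split; auto; lia.
  - replace n with (n' + (n - n')) in * by lia. symmetry.
    apply (T_rel_aux n' (n-n') i' i x); auto; split; auto; lia.
Qed.

Lemma T_formula n i x : inlev n i x -> S i < hgt n -> T rN s x = (x - ls n i + ls n (S i))%R.
Proof.
  intros Hx Hi.
  assert (HT: T_rel rN s x (x - ls n i + ls n (S i))%R).
  { exists n, i. rewrite length_col. destruct Hx. auto. }
  apply (T_rel_unique x). unfold T. apply epsilon_spec. eauto. auto.
Qed.

Lemma T_iter n i x k : inlev n i x -> i + k < hgt n ->
  Nat.iter k (T rN s) x = (x - ls n i + ls n (i + k))%R /\ inlev n (i + k) (Nat.iter k (T rN s) x).
Proof.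
  intros Hx. induction k; intros Hk.
  - simpl. rewrite Nat.add_0_r. split. lra. auto.
  - destruct (IHk ltac:(lia)) as [E H]. rewrite Nat.iter_succ.
    rewrite (T_formula n (i+k)) by (auto; lia). rewrite E. replace (i + S k) with (S (i + k)) by lia.
    split. lra.
    destruct Hx as [_ [H1 H2]]. split. lia.
    destruct H as [_ [H3 H4]]. rewrite E in *. lra.
Qed.

End Geo.

Open Scope nat_scope.

Lemma exists_nat_gt (x : R) : exists n : nat, (x < INR n)%R.
Proof. destruct (INR_archimed 1 x) as [n Hn]. lra. exists n. lra. Qed.

Lemma H_max n m : H_set n m -> m <= 5 ^ (e_exp n + n).
Proof.
  intros [->|[[j [[Hj1 Hj2] ->]]|[i [[Hi1 Hi2] ->]]]].
  - lia.
  - unfold hgt. rewrite Nat.pow_add_r. pose proof (Nat.sqrt_up_le_lin n ltac:(lia)).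
    pose proof (pow5_ge' n). pose proof (Nat.pow_nonzero 5 (e_exp n) ltac:(lia)). nia.
  - apply Nat.pow_le_mono_r; lia.
Qed.

Section Geo3.
Variable s : nat -> nat -> nat.
Hypothesis Hsum : forall n, list_sum (map (fun k => hgt n + s n k)%nat (seq 0 (rN n))) = hgt (S n).
Hypothesis HH : forall n m, H_of rN s hgt n m <-> H_set n m.

Notation w m := (width rN m).
Notation ls := (level_start rN s).
Notation pi := (piF s).
Notation inlev := (inlev s).

Lemma Pk_last n : Pk s n (S n) <= 5 ^ (e_exp n + n).
Proof.
  apply H_max. apply HH. right. exists n. split. unfold rN; lia. reflexivity.
Qed.

Lemma Lr_S m : (2 * Lr m <= Lr (S m))%R.
Proof.
  unfold Lr. rewrite width_S, hgt_S5. pose proof (pow5_ge m).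
  apply le_INR in H. rewrite mult_INR in *. pose proof (INR_rN_pos m).
  replace (INR 2) with 2%R in H by (simpl; lra). change (m + 2) with (rN m) in H. pose proof (width_pos m). pose proof (pos_INR (hgt m)).
  set (h := INR (hgt m)) in *. set (P := INR (5 ^ S m)) in *. set (r := INR (rN m)) in *. set (ww := w m) in *.
  replace (h * P * (ww / r))%R with ((h * ww / r) * P)%R by (field; lra).
  assert (0 <= h * ww / r)%R. { apply Rmult_le_pos. nra. left; apply Rinv_0_lt_compat; lra. }
  apply Rle_trans with ((h * ww / r) * (2 * r))%R. right. field. lra.
  apply Rmult_le_compat_l; auto.
Qed.

Lemma Lr_ge m : (INR m + 1 <= Lr m)%R.
Proof.
  induction m. unfold Lr. change (hgt 0) with 1. simpl. lra.
  pose proof (Lr_S m). rewrite S_INR. pose proof (pos_INR m). lra.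
Qed.

Lemma EX x k N0 : (0 <= x)%R -> exists n, N0 <= n /\ exists c, c + k < hgt n /\ inlev n c x.
Proof.
  intros Hx. destruct (exists_nat_gt x) as [m0 Hm0].
  set (m := Nat.max (Nat.max N0 k) m0).
  assert (Hxm : (x < Lr m)%R).
  { pose proof (Lr_ge m). assert (m0 <= m) by lia. apply le_INR in H0. lra. }
  exists (S m). split. lia.
  assert (Hx2 : (x < INR (hgt m * rN m) * w (S m))%R).
  { unfold Lr in Hxm. rewrite mult_INR, width_S. pose proof (INR_rN_pos m).
    replace (INR (hgt m) * INR (rN m) * (w m / INR (rN m)))%R with (INR (hgt m) * w m)%R by (field; lra). lra. }
  destruct (slot_exists _ _ _ (width_pos (S m)) Hx Hx2) as [q [Hq Hq2]].
  pose proof (hgt_ge_r s Hsum m).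
  destruct (pi_surj s Hsum (S m) q ltac:(nia)) as [c [Hc Ec]].
  assert (Hin : inlev (S m) c x). { split; auto. rewrite ls_eq, Ec. auto. }
  exists c. split; auto.
  destruct (decomp_S s Hsum m c Hc) as [kk [Hk [[j [Hj ->]]|[t [Ht ->]]]]].
  - pose proof (Pk_mono s m kk (S m) ltac:(unfold rN in Hk; lia)). pose proof (Pk_last m).
    rewrite hgt_S5. unfold hgt in *. rewrite Nat.pow_add_r in *.
    pose proof (pow5_ge' m). pose proof (Nat.pow_nonzero 5 (e_exp m) ltac:(lia)).
    rewrite Nat.pow_succ_r'. assert (k <= m) by lia. assert (5 ^ m <> 0) by (apply Nat.pow_nonzero; lia). assert (5 ^ e_exp m * 1 <= 5 ^ e_exp m * 5 ^ m) by (apply Nat.mul_le_mono_l; lia). assert (m <= 5 ^ e_exp m * 5 ^ m) by nia. lia.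
  - rewrite (pi_spacer s Hsum) in Ec by auto. nia.
Qed.

Lemma Back N x k : (0 <= x)%R -> (Nat.iter k (T rN s) x < Lr N)%R ->
  exists j, j < hgt N /\ inlev N j (Nat.iter k (T rN s) x) /\
    (j < k \/ (k <= j /\ inlev N (j - k) x /\
       Nat.iter k (T rN s) x = (x + (INR (pi N j) - INR (pi N (j - k))) * w N)%R)).
Proof.
  intros Hx Hy.
  destruct (EX x k N Hx) as [n [Hn [c [Hc Hin]]]].
  destruct (T_iter s Hsum n c x k Hin ltac:(lia)) as [E Hin2].
  replace n with (N + (n - N)) in * by lia. set (d := n - N) in *.
  destruct (N2 s Hsum N d (c + k) ltac:(lia)) as [[p [Hp [j [Hj Ej]]]]|L].
  - exists j. split; auto. rewrite Ej in Hin2. split. apply (level_in_copy s Hsum N d p j); auto.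
    destruct (Nat.lt_ge_cases j k) as [L|L]. left; auto. right. split; auto.
    assert (Ec : c = fst p + (j - k)) by lia. rewrite Ec in Hin. split.
    apply (level_in_copy s Hsum N d p (j - k)); auto. lia.
    rewrite E. rewrite Ec. destruct (N1 s Hsum N d p Hp) as [A [B C]].
    replace (fst p + (j - k) + k) with (fst p + j) by lia.
    rewrite !ls_eq, !C by lia. rewrite (width_Rr N d). rewrite !plus_INR, !mult_INR. ring.
  - pose proof (outside_ge s N d (c+k) _ L Hin2). lra.
Qed.

Lemma Mem n0 d c y : inlev (n0 + d) c y -> (y < Lr n0)%R ->
  exists p, In p (Gl s n0 d) /\ exists j, j < hgt n0 /\ c = fst p + j.
Proof.
  intros Hin Hy. destruct Hin as [Hc HH2].
  destruct (N2 s Hsum n0 d c Hc) as [H|L]; auto.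
  pose proof (outside_ge s n0 d c y L (conj Hc HH2)). lra.
Qed.

End Geo3.

Open Scope R_scope.

Fixpoint rs (f : nat -> R) (n : nat) : R := match n with O => 0 | S n' => rs f n' + f n' end.

Lemma sum_rs f N : sum_f_R0 f N = rs f (S N).
Proof. induction N; simpl. lra. rewrite IHN. simpl. lra. Qed.

Lemma rs_mono f n m : (forall i, 0 <= f i) -> (n <= m)%nat -> rs f n <= rs f m.
Proof. intros Hf. induction 1. lra. simpl. specialize (Hf m). lra. Qed.

Lemma rs_nonneg f n : (forall i, 0 <= f i) -> 0 <= rs f n.
Proof. intros. apply (rs_mono f 0 n); auto. lia. Qed.

Lemma rs_add f a b : rs f (a + b) = rs f a + rs (fun i => f (a + i)%nat) b.
Proof. induction b; simpl. rewrite Nat.add_0_r. lra. rewrite Nat.add_succ_r. simpl. rewrite IHb. lra. Qed.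

Lemma rs_shift f n : rs f (S n) = f 0%nat + rs (fun i => f (S i)) n.
Proof. induction n; simpl in *. lra. rewrite IHn. lra. Qed.

Lemma rs_le f g n : (forall i, (i < n)%nat -> f i <= g i) -> rs f n <= rs g n.
Proof. induction n; intros H; simpl. lra. assert (f n <= g n) by (apply H; lia). assert (rs f n <= rs g n) by (apply IHn; intros; apply H; lia). lra. Qed.

Lemma rs_ext f g n : (forall i, (i < n)%nat -> f i = g i) -> rs f n = rs g n.
Proof. induction n; intros H; simpl. lra. rewrite H by lia. rewrite IHn; auto. Qed.

Lemma rs_plus f g n : rs (fun i => f i + g i) n = rs f n + rs g n.
Proof. induction n; simpl. lra. rewrite IHn. lra. Qed.

Lemma rs_const c n : rs (fun _ => c) n = INR n * c.
Proof. induction n; simpl rs. simpl; lra. rewrite IHn, S_INR. lra. Qed.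

Lemma rs_scal c f n : rs (fun i => c * f i) n = c * rs f n.
Proof. induction n; simpl. lra. rewrite IHn. lra. Qed.

Lemma rs_ge_term f n i : (forall i, 0 <= f i) -> (i < n)%nat -> f i <= rs f n.
Proof.
  intros Hf Hi. pose proof (rs_mono f (S i) n Hf Hi). simpl in H.
  pose proof (rs_nonneg f i Hf). lra.
Qed.

Lemma rs_block h M I : rs h (I * M) = rs (fun i => rs (fun r => h (i * M + r)%nat) M) I.
Proof.
  induction I. reflexivity.
  replace (S I * M)%nat with (I * M + M)%nat by lia. rewrite rs_add, IHI. simpl. reflexivity.
Qed.

Lemma geom_rs n : rs (fun i => (/2) ^ (S i)) n = 1 - (/2) ^ n.
Proof. induction n. simpl. lra.
  change (rs (fun i => (/2) ^ (S i)) (S n)) with (rs (fun i => (/2) ^ (S i)) n + (/2) ^ (S n)).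
  rewrite IHn. simpl. lra. Qed.

Lemma geom_rs_le c n : 0 <= c -> rs (fun i => c * (/2) ^ (S i)) n <= c.
Proof.
  intros Hc. rewrite (rs_scal c (fun i => (/2) ^ (S i))), geom_rs. pose proof (pow_le (/2) n ltac:(lra)).
  assert ((/2)^n <= 1). { pose proof (rs_nonneg (fun i => (/2) ^ (S i)) n ltac:(intros; apply pow_le; lra)). rewrite geom_rs in H0. lra. } nra.
Qed.


Lemma ol_intro X m :
  (forall eps, 0 < eps -> exists a b : nat -> R, (forall n, a n <= b n) /\
     (forall x, X x -> exists n, a n < x < b n) /\
     (forall n, rs (fun i => b i - a i) n <= m + eps)) -> outer_le X m.
Proof.
  intros H eps Heps. destruct (H eps Heps) as [a [b [H1 [H2 H3]]]].
  exists a, b. repeat split; auto. intros N. rewrite sum_rs. apply H3.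
Qed.

Lemma ol_elim X m eps : outer_le X m -> 0 < eps -> exists a b : nat -> R, (forall n, a n <= b n) /\
     (forall x, X x -> exists n, a n < x < b n) /\
     (forall n, rs (fun i => b i - a i) n <= m + eps).
Proof.
  intros H Heps. destruct (H eps Heps) as [a [b [H1 [H2 H3]]]].
  exists a, b. repeat split; auto. intros n. destruct n. simpl.
  specialize (H3 0%nat). simpl in H3. specialize (H1 0%nat). lra.
  rewrite <- sum_rs. apply H3.
Qed.

Lemma ol_nonneg X m : outer_le X m -> 0 <= m.
Proof.
  intros H. destruct (Rle_or_lt 0 m) as [L|L]; auto.
  destruct (ol_elim X m (-m/2) H ltac:(lra)) as [a [b [H1 [H2 H3]]]].
  specialize (H3 1%nat). simpl in H3. specialize (H1 0%nat). lra.
Qed.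

Lemma ol_mono X Y m m' : outer_le X m -> (forall y, Y y -> X y) -> m <= m' -> outer_le Y m'.
Proof.
  intros H HY Hm eps Heps. destruct (H eps Heps) as [a [b [H1 [H2 H3]]]].
  exists a, b. repeat split; auto. intros N. specialize (H3 N). lra.
Qed.

Lemma even_2n n : Nat.even (2 * n) = true.
Proof. apply Nat.even_spec. exists n. lia. Qed.

Lemma even_2n1 n : Nat.even (S (2 * n)) = false.
Proof. destruct (Nat.even (S (2 * n))) eqn:E; auto. apply Nat.even_spec in E. destruct E. lia. Qed.

Lemma ol_union X Y p q : outer_le X p -> outer_le Y q -> outer_le (fun y => X y \/ Y y) (p + q).
Proof.
  intros HX HY. apply ol_intro. intros eps Heps.
  destruct (ol_elim X p (eps/2) HX ltac:(lra)) as [a1 [b1 [A1 [B1 C1]]]].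
  destruct (ol_elim Y q (eps/2) HY ltac:(lra)) as [a2 [b2 [A2 [B2 C2]]]].
  exists (fun n => if Nat.even n then a1 (Nat.div2 n) else a2 (Nat.div2 n)).
  exists (fun n => if Nat.even n then b1 (Nat.div2 n) else b2 (Nat.div2 n)).
  repeat split.
  - intros n. destruct (Nat.even n); auto.
  - intros x [Hx|Hx].
    + destruct (B1 x Hx) as [n Hn]. exists (2 * n)%nat. rewrite even_2n, Nat.div2_double. auto.
    + destruct (B2 x Hx) as [n Hn]. exists (S (2 * n))%nat. rewrite even_2n1, Nat.div2_succ_double. auto.
  - assert (Key : forall N, rs (fun n => (if Nat.even n then b1 (Nat.div2 n) else b2 (Nat.div2 n)) -
                   (if Nat.even n then a1 (Nat.div2 n) else a2 (Nat.div2 n))) (2 * N) =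
                   rs (fun i => b1 i - a1 i) N + rs (fun i => b2 i - a2 i) N).
    { induction N. simpl. lra. replace (2 * S N)%nat with (S (S (2 * N))) by lia.
      match goal with |- context [rs ?f (S (S ?m))] => change (rs f (S (S m))) with (rs f m + f m + f (S m)) end. cbv beta.
      rewrite IHN. rewrite even_2n1, even_2n, Nat.div2_succ_double, Nat.div2_double. cbn [rs]. lra. }
    intros n. apply Rle_trans with (rs (fun n => (if Nat.even n then b1 (Nat.div2 n) else b2 (Nat.div2 n)) -
                   (if Nat.even n then a1 (Nat.div2 n) else a2 (Nat.div2 n))) (2 * n)).
    + apply rs_mono. intros i. destruct (Nat.even i); [specialize (A1 (Nat.div2 i))|specialize (A2 (Nat.div2 i))]; lra. lia.
    + rewrite Key. specialize (C1 n). specialize (C2 n). lra.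
Qed.

Definition Lsum (L : list (R * R)) : R := fold_right (fun p acc => snd p - fst p + acc) 0 L.

Lemma Lsum_nonneg L : (forall p, In p L -> fst p <= snd p) -> 0 <= Lsum L.
Proof. induction L; simpl; intros H. lra. assert (fst a <= snd a) by auto. assert (0 <= Lsum L) by auto. lra. Qed.

Lemma ol_finite (X : R -> Prop) L : (forall p, In p L -> fst p <= snd p) ->
  (forall y, X y -> exists p, In p L /\ fst p <= y < snd p) -> outer_le X (Lsum L).
Proof.
  intros HL HX. apply ol_intro. intros eps Heps.
  set (eta := eps / (INR (length L) + 1)).
  assert (Heta : 0 < eta). { unfold eta. apply Rdiv_lt_0_compat; auto. pose proof (pos_INR (length L)). lra. }
  exists (fun n => if (n <? length L)%nat then fst (nth n L (0,0)) - eta else 0).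
  exists (fun n => if (n <? length L)%nat then snd (nth n L (0,0)) else 0).
  repeat split.
  - intros n. destruct (Nat.ltb_spec n (length L)). pose proof (HL (nth n L (0,0)) (nth_In _ _ H)). lra. lra.
  - intros y Hy. destruct (HX y Hy) as [p [Hp Hp2]]. destruct (In_nth L p (0,0) Hp) as [n [Hn E]].
    exists n. destruct (Nat.ltb_spec n (length L)); try lia. rewrite E. lra.
  - assert (Key : forall L n, (forall p, In p L -> fst p <= snd p) ->
        rs (fun i => (if (i <? length L)%nat then snd (nth i L (0,0)) else 0) -
                     (if (i <? length L)%nat then fst (nth i L (0,0)) - eta else 0)) n
        <= Lsum L + INR (length L) * eta).
    { clear HX HL. induction L0; intros n HL.
      - simpl. apply Rle_trans with (rs (fun _ => 0) n). right. apply rs_ext. intros. lra.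
        rewrite rs_const. lra.
      - destruct n. { simpl rs. pose proof (Lsum_nonneg (a :: L0) HL). pose proof (pos_INR (length (a :: L0))). nra. }
        rewrite rs_shift. simpl length. simpl Nat.ltb. simpl nth.
        replace (fun i : nat => (if (S i <? S (length L0))%nat then snd (nth i L0 (0, 0)) else 0) -
           (if (S i <? S (length L0))%nat then fst (nth i L0 (0, 0)) - eta else 0))
          with (fun i : nat => (if (i <? length L0)%nat then snd (nth i L0 (0, 0)) else 0) -
           (if (i <? length L0)%nat then fst (nth i L0 (0, 0)) - eta else 0)) by reflexivity.
        pose proof (IHL0 n ltac:(intros; apply HL; simpl; auto)). simpl Lsum. rewrite S_INR. change (0 <? S (length L0))%nat with true. cbv iota. lra. }
    intros n. pose proof (Key L n HL).
    assert (INR (length L) * eta <= eps).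
    { unfold eta. pose proof (pos_INR (length L)).
      replace (INR (length L) * (eps / (INR (length L) + 1))) with (eps - eps / (INR (length L) + 1)) by (field; lra).
      assert (0 < eps / (INR (length L) + 1)) by (apply Rdiv_lt_0_compat; lra). lra. }
    lra.
Qed.

Lemma ol_tail A M0 delta : outer_le A M0 -> 0 < delta -> exists R0, outer_le (fun x => A x /\ R0 <= x) delta.
Proof.
  intros HA Hd. destruct (ol_elim A M0 1 HA ltac:(lra)) as [a [b [H1 [H2 H3]]]].
  set (S := fun n => rs (fun i => b i - a i) n).
  assert (Hf : forall i, 0 <= b i - a i) by (intros; specialize (H1 i); lra).
  destruct (completeness (fun y => exists n, y = S n)) as [l [Hl1 Hl2]].
  { exists (M0 + 1). intros y [n ->]. apply H3. }
  { exists (S 0%nat). eauto. }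
  assert (HN0 : exists N0, l - delta < S N0).
  { destruct (Rle_or_lt 0 1) as [_|]; [|lra].
    apply Classical_Prop.NNPP. intros Hc.
    assert (is_upper_bound (fun y => exists n, y = S n) (l - delta)).
    { intros y [n ->]. apply Rnot_lt_le. intros Hlt. apply Hc. eauto. }
    specialize (Hl2 _ H). lra. }
  destruct HN0 as [N0 HN0].
  exists (rs (fun i => Rabs (b i)) N0).
  apply ol_intro. intros eps Heps.
  exists (fun n => a (N0 + n)%nat), (fun n => b (N0 + n)%nat). repeat split.
  - intros; auto.
  - intros x [Ax Rx]. destruct (H2 x Ax) as [i Hi].
    destruct (Nat.lt_ge_cases i N0) as [L|L].
    + pose proof (rs_ge_term (fun i => Rabs (b i)) N0 i ltac:(intros; apply Rabs_pos) L). simpl in H.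
      pose proof (Rle_abs (b i)). lra.
    + exists (i - N0)%nat. replace (N0 + (i - N0))%nat with i by lia. auto.
  - intros n. assert (S (N0 + n)%nat <= l) by (apply Hl1; eauto).
    unfold S in H, HN0. rewrite rs_add in H. lra.
Qed.

Definition Ls (g : nat -> R) (Q : list nat) : R := fold_right (fun q acc => g q + acc) 0 Q.

Lemma Ls_app g Q1 Q2 : Ls g (Q1 ++ Q2) = Ls g Q1 + Ls g Q2.
Proof. induction Q1; simpl. lra. rewrite IHQ1. lra. Qed.

Lemma Ls_subset g Q B : (forall i, 0 <= g i) -> NoDup Q -> (forall q, In q Q -> (q < B)%nat) -> Ls g Q <= rs g B.
Proof.
  intros Hg. revert Q. induction B; intros Q HQ HB.
  - destruct Q. simpl; lra. specialize (HB n (or_introl eq_refl)). lia.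
  - destruct (in_dec Nat.eq_dec B Q) as [HIn|HIn].
    + destruct (in_split _ _ HIn) as [Q1 [Q2 ->]].
      destruct (NoDup_remove _ _ _ HQ) as [ND NI].
      rewrite Ls_app. simpl.
      assert (Ls g (Q1 ++ Q2) <= rs g B).
      { apply IHB; auto. intros q Hq. assert (q <> B) by (intro; subst; auto).
        assert (q < S B)%nat by (apply HB; apply in_app_or in Hq; apply in_or_app; simpl; tauto). lia. }
      rewrite Ls_app in H. lra.
    + simpl. assert (Ls g Q <= rs g B).
      { apply IHB; auto. intros q Hq. assert (q <> B) by (intro; subst; auto). specialize (HB q Hq). lia. }
      specialize (Hg B). lra.
Qed.

Definition clip (a b c w : R) : R := Rmax 0 (Rmin b (c + w) - Rmax a c).
Definition Fcl (a b t : R) : R := Rmax a (Rmin b t).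

Lemma clip_eq a b c w : a <= b -> 0 <= w -> clip a b c w = Fcl a b (c + w) - Fcl a b c.
Proof. intros. unfold clip, Fcl. unfold Rmax, Rmin. repeat destruct Rle_dec; lra. Qed.

Lemma clip_sum a b w B : a <= b -> 0 <= w -> rs (fun q => clip a b (INR q * w) w) B <= b - a.
Proof.
  intros Hab Hw.
  assert (forall B, rs (fun q => clip a b (INR q * w) w) B = Fcl a b (INR B * w) - Fcl a b 0).
  { induction B0. simpl. rewrite Rmult_0_l. lra. simpl rs. rewrite IHB0, clip_eq by auto. rewrite S_INR. replace ((INR B0 + 1) * w) with (INR B0 * w + w) by ring. lra. }
  rewrite H. unfold Fcl. unfold Rmax, Rmin. repeat destruct Rle_dec; lra.
Qed.

Lemma clip_nonneg a b c w : 0 <= clip a b c w.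
Proof. unfold clip. apply Rmax_l. Qed.

Lemma clip_distinct a b w Q B : a <= b -> 0 <= w -> NoDup Q -> (forall q, In q Q -> (q < B)%nat) ->
  Ls (fun q => clip a b (INR q * w) w) Q <= b - a.
Proof.
  intros. eapply Rle_trans. apply Ls_subset; eauto. intros; apply clip_nonneg. apply clip_sum; auto.
Qed.

Open Scope R_scope.

Lemma rs_Ls (g : nat -> R) (f : nat -> nat) M : rs (fun r => g (f r)) M = Ls g (map f (seq 0 M)).
Proof.
  induction M. reflexivity. rewrite seq_S, map_app, Ls_app. simpl rs. rewrite IHM. simpl. lra.
Qed.

Lemma divmod_block i r M : (r < M)%nat -> ((i * M + r) / M = i /\ (i * M + r) mod M = r)%nat.
Proof.
  intros H. replace (i * M + r)%nat with (r + i * M)%nat by lia. split.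
  - rewrite Nat.div_add by lia. rewrite Nat.div_small by auto. lia.
  - rewrite Nat.Div0.mod_add. apply Nat.mod_small; auto.
Qed.

Section Trans.
Variable s : nat -> nat -> nat.
Hypothesis Hsum : forall n, list_sum (map (fun k => hgt n + s n k)%nat (seq 0 (rN n))) = hgt (S n).

Notation w m := (width rN m).
Notation ls := (level_start rN s).
Notation pi := (piF s).
Notation inlev := (inlev s).

Variables N k : nat.

Definition tau (j : nat) : R := (INR (pi N j) - INR (pi N (j - k))) * w N.

Definition TransE (E : R -> Prop) (y : R) : Prop :=
  exists j, (j < hgt N)%nat /\ (k <= j)%nat /\ exists x, E x /\ inlev N (j - k) x /\ y = x + tau j.

Lemma ol_trans E m : outer_le E m -> outer_le (TransE E) m.
Proof.
  intros HE. pose proof (ol_nonneg E m HE) as Hm.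
  set (M := (hgt N - k)%nat).
  destruct (Nat.eq_dec M 0) as [M0|MP].
  - apply ol_mono with (X := fun _ => False) (m := Lsum []); [|intros y [j [Hj [Hk _]]]; unfold M in M0; lia| simpl; lra].
    apply ol_finite. simpl; tauto. intros y [].
  - apply ol_intro. intros eps Heps.
    destruct (ol_elim E m (eps/2) HE ltac:(lra)) as [a [b [H1 [H2 H3]]]].
    set (ww := w N). assert (Hw : 0 < ww) by apply width_pos.
    set (eta := fun i => (eps / 2) / INR M * (/2) ^ (S i)).
    assert (HMpos : 0 < INR M) by (apply lt_0_INR; lia).
    assert (Heta : forall i, 0 < eta i).
    { intros i. unfold eta. apply Rmult_lt_0_compat. apply Rdiv_lt_0_compat; lra. apply pow_lt; lra. }
    set (c := fun r => INR (pi N r) * ww).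
    set (al := fun n => Rmax (a (n / M)%nat) (c (n mod M)%nat)).
    set (be := fun n => Rmin (b (n / M)%nat) (c (n mod M)%nat + ww)).
    set (tp := fun n => (INR (pi N (k + n mod M)) - INR (pi N (n mod M))) * ww).
    exists (fun n => Rmin (al n - eta (n / M)%nat) (be n) + tp n).
    exists (fun n => be n + tp n).
    repeat split.
    + intros n. pose proof (Rmin_r (al n - eta (n / M)%nat) (be n)). lra.
    + intros y [j [Hj [Hk [x [Ex [Hin ->]]]]]].
      destruct (H2 x Ex) as [i Hi].
      set (r := (j - k)%nat). assert (Hr : (r < M)%nat) by (unfold r, M; lia).
      exists (i * M + r)%nat. destruct (divmod_block i r M Hr) as [D1 D2].
      unfold al, be, tp. rewrite D1, D2.
      destruct Hin as [_ [Hx1 Hx2]]. rewrite ls_eq in Hx1, Hx2. fold ww in Hx1, Hx2. fold r in Hx1, Hx2.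
      unfold tau. replace (k + r)%nat with j by (unfold r; lia). fold r. fold ww.
      assert (Rmax (a i) (c r) <= x). { apply Rmax_lub; unfold c; lra. }
      assert (x < Rmin (b i) (c r + ww)). { apply Rmin_glb_lt; unfold c; lra. }
      pose proof (Rmin_l (Rmax (a i) (c r) - eta i) (Rmin (b i) (c r + ww))). pose proof (Heta i). lra.
    + intros n.
      assert (Hlen : forall n, be n + tp n - (Rmin (al n - eta (n / M)%nat) (be n) + tp n)
                      <= clip (a (n / M)%nat) (b (n / M)%nat) (c (n mod M)%nat) ww + eta (n / M)%nat).
      { intros n'. unfold al, be, clip. pose proof (Heta (n' / M)%nat).
        unfold Rmax, Rmin. repeat destruct Rle_dec; lra. }
      assert (Hnn : forall n, 0 <= be n + tp n - (Rmin (al n - eta (n / M)%nat) (be n) + tp n)).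
      { intros n'. pose proof (Rmin_r (al n' - eta (n' / M)%nat) (be n')). lra. }
      set (I := S (n / M)).
      apply Rle_trans with (rs (fun n => be n + tp n - (Rmin (al n - eta (n / M)%nat) (be n) + tp n)) (I * M)).
      { apply rs_mono; auto. unfold I. pose proof (Nat.div_mod_eq n M). pose proof (Nat.mod_upper_bound n M MP). nia. }
      rewrite rs_block.
      apply Rle_trans with (rs (fun i => (b i - a i) + eta i * INR M) I).
      { apply rs_le. intros i Hi.
        apply Rle_trans with (rs (fun r => clip (a i) (b i) (c r) ww + eta i) M).
        { apply rs_le. intros r Hr. destruct (divmod_block i r M Hr) as [D1 D2].
          specialize (Hlen (i * M + r)%nat). rewrite D1, D2 in Hlen. rewrite D1. exact Hlen. }
        rewrite rs_plus, rs_const.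
        assert (rs (fun r => clip (a i) (b i) (c r) ww) M <= b i - a i).
        { unfold c. rewrite (rs_Ls (fun q => clip (a i) (b i) (INR q * ww) ww) (pi N) M).
          apply clip_distinct with (B := hgt N).
          - apply H1.
          - lra.
          - apply NoDup_map_NoDup_ForallPairs. intros u v Hu Hv Euv. apply in_seq in Hu. apply in_seq in Hv.
            apply (pi_inj s Hsum N); auto; unfold M in *; lia. apply seq_NoDup.
          - intros q Hq. apply in_map_iff in Hq. destruct Hq as [r [<- Hr]]. apply in_seq in Hr.
            apply (pi_bound s Hsum). unfold M in *; lia. }
        lra. }
      rewrite rs_plus. specialize (H3 I).
      assert (rs (fun i => eta i * INR M) I <= eps / 2).
      { apply Rle_trans with (rs (fun i => (eps/2) * (/2) ^ (S i)) I).
        { right. apply rs_ext. intros i _. unfold eta. field. lra. }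
        apply geom_rs_le. lra. }
      lra.
Qed.

End Trans.

Section Levels.
Variable s : nat -> nat -> nat.
Hypothesis Hsum : forall n, list_sum (map (fun k => hgt n + s n k)%nat (seq 0 (rN n))) = hgt (S n).

Lemma ol_levels N (J : list nat) :
  outer_le (fun y => exists j, In j J /\ inlev s N j y) (INR (length J) * width rN N).
Proof.
  replace (INR (length J) * width rN N) with
     (Lsum (map (fun j => (level_start rN s N j, level_start rN s N j + width rN N)) J)).
  - apply ol_finite.
    + intros p Hp. apply in_map_iff in Hp. destruct Hp as [j [<- _]]. simpl. pose proof (width_pos N). lra.
    + intros y [j [Hj [_ Hy]]]. exists (level_start rN s N j, level_start rN s N j + width rN N).
      split. apply in_map_iff. eauto. simpl. auto.
  - induction J. simpl. lra. simpl. rewrite IHJ. destruct (length J); simpl; lra.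
Qed.

End Levels.

Open Scope nat_scope.

Lemma ls_plus {A} (f g : A -> nat) l : list_sum (map (fun x => f x + g x) l) = list_sum (map f l) + list_sum (map g l).
Proof. induction l; simpl; lia. Qed.

Lemma ls_le {A} (f g : A -> nat) l : (forall x, In x l -> f x <= g x) -> list_sum (map f l) <= list_sum (map g l).
Proof. induction l; simpl; intros H. lia. assert (f a <= g a) by auto. assert (list_sum (map f l) <= list_sum (map g l)) by auto. lia. Qed.

Lemma ls_ext {A} (f g : A -> nat) l : (forall x, In x l -> f x = g x) -> list_sum (map f l) = list_sum (map g l).
Proof. induction l; simpl; intros H. lia. rewrite H by auto. rewrite IHl; auto. Qed.

Lemma ls_mul_r {A} (f : A -> nat) c l : list_sum (map (fun x => f x * c) l) = list_sum (map f l) * c.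
Proof. induction l; simpl; lia. Qed.

Lemma ls_const {A} c (l : list A) : list_sum (map (fun _ => c) l) = length l * c.
Proof. induction l; simpl; lia. Qed.

Lemma ls_swap {A B} (f : A -> B -> nat) l1 l2 :
  list_sum (map (fun x => list_sum (map (fun y => f x y) l2)) l1) =
  list_sum (map (fun y => list_sum (map (fun x => f x y) l1)) l2).
Proof.
  induction l1; simpl. induction l2; simpl; lia.
  rewrite IHl1. rewrite <- ls_plus. reflexivity.
Qed.

Lemma ls_flat_map {A B} (f : B -> nat) (F : A -> list B) l :
  list_sum (map f (flat_map F l)) = list_sum (map (fun x => list_sum (map f (F x))) l).
Proof. induction l; simpl. auto. rewrite map_app, list_sum_app, IHl. auto. Qed.

Lemma ls_app {A} (f : A -> nat) l1 l2 : list_sum (map f (l1 ++ l2)) = list_sum (map f l1) + list_sum (map f l2).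
Proof. rewrite map_app, list_sum_app. auto. Qed.

Lemma ls_le_one {A} (f : A -> nat) l :
  (forall x, In x l -> f x <= 1) -> (forall x y, In x l -> In y l -> f x <> 0 -> f y <> 0 -> x = y) -> NoDup l ->
  list_sum (map f l) <= 1.
Proof.
  induction l; simpl; intros H1 H2 ND. lia. inversion ND; subst.
  destruct (Nat.eq_dec (f a) 0).
  - assert (list_sum (map f l) <= 1) by (apply IHl; auto). lia.
  - assert (list_sum (map f l) = 0).
    { assert (forall x, In x l -> f x = 0).
      { intros x Hx. destruct (Nat.eq_dec (f x) 0); auto. exfalso. assert (x = a) by (apply H2; auto). subst; auto. }
      rewrite (ls_ext f (fun _ => 0)) by auto. rewrite ls_const. lia. }
    specialize (H1 a (or_introl eq_refl)). lia.
Qed.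

Lemma ls_ind_eq k r : k < r -> list_sum (map (fun k' => if k' =? k then 1 else 0) (seq 0 r)) = 1.
Proof.
  intros H. apply Nat.le_antisymm.
  - apply ls_le_one. intros; destruct (_ =? _); lia.
    intros x y _ _ Hx Hy. destruct (Nat.eqb_spec x k); destruct (Nat.eqb_spec y k); try lia.
    apply seq_NoDup.
  - replace (seq 0 r) with (seq 0 k ++ [k] ++ seq (S k) (r - S k)).
    rewrite !ls_app. simpl. rewrite Nat.eqb_refl. lia.
    transitivity (seq 0 (k + S (r - S k))). rewrite seq_app. reflexivity. f_equal. lia.
Qed.

Lemma ls_nonzero {A} (f : A -> nat) l : list_sum (map f l) <> 0 -> exists x, In x l /\ f x <> 0.
Proof. induction l; simpl; intros H. lia. destruct (Nat.eq_dec (f a) 0). destruct IHl as [x [Hx Hx2]]. lia. eauto. eauto. Qed.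

Lemma pow5_lt n : n < 5 ^ n.
Proof. induction n. simpl; lia. rewrite Nat.pow_succ_r'. lia. Qed.

Definition psi (j k : nat) : nat := if k <=? Nat.sqrt_up j then k else 5 ^ (k - 1).
Definition phi (j k : nat) : nat := hgt j * psi j k.

Lemma sqrt_up_le j : Nat.sqrt_up j <= j.
Proof. apply Nat.sqrt_up_le_lin. lia. Qed.

Lemma psi_strict j k : k <= j -> psi j k < psi j (S k).
Proof.
  intros H. unfold psi. pose proof (sqrt_up_le j).
  destruct (Nat.leb_spec k (Nat.sqrt_up j)); destruct (Nat.leb_spec (S k) (Nat.sqrt_up j)); try lia.
  - assert (k = Nat.sqrt_up j) by lia. subst. simpl. rewrite Nat.sub_0_r.
    pose proof (pow5_lt (Nat.sqrt_up j)). lia.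
  - replace (S k - 1) with (S (k - 1)) by lia. rewrite Nat.pow_succ_r'.
    pose proof (Nat.pow_nonzero 5 (k-1) ltac:(lia)). lia.
Qed.

Lemma strict_mono (f : nat -> nat) n : (forall k, k < n -> f k < f (S k)) -> forall a b, a < b -> b <= n -> f a < f b.
Proof.
  intros H a b Hab. induction Hab; intros Hb. apply H; lia.
  assert (f a < f m) by (apply IHHab; lia). specialize (H m ltac:(lia)). lia.
Qed.

Lemma psi_lt j a b : a < b -> b <= S j -> psi j a < psi j b.
Proof. intros. apply (strict_mono (psi j) (S j)); auto. intros; apply psi_strict; lia. Qed.

Lemma psi_inj j a b : a <= S j -> b <= S j -> psi j a = psi j b -> a = b.
Proof.
  intros Ha Hb E. destruct (Nat.lt_trichotomy a b) as [L|[L|L]]; auto.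
  pose proof (psi_lt j a b L Hb). lia. pose proof (psi_lt j b a L Ha). lia.
Qed.

Lemma psi_last j : psi j (S j) = 5 ^ j.
Proof. unfold psi. pose proof (sqrt_up_le j). destruct (Nat.leb_spec (S j) (Nat.sqrt_up j)). lia. f_equal. lia. Qed.

Lemma psi_le_last j k : k <= S j -> psi j k <= 5 ^ j.
Proof. intros H. rewrite <- psi_last. destruct (Nat.eq_dec k (S j)). subst; lia. pose proof (psi_lt j k (S j)). lia. Qed.

Lemma phi_H j m : H_set j m <-> exists k, k <= S j /\ m = phi j k.
Proof.
  unfold phi, psi, H_set. pose proof (sqrt_up_le j). split.
  - intros [->|[[a [[Ha1 Ha2] ->]]|[i [[Hi1 Hi2] ->]]]].
    + exists 0. split. lia. simpl. lia.
    + exists a. split. lia. destruct (Nat.leb_spec a (Nat.sqrt_up j)); lia.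
    + exists (S i). split. lia. destruct (Nat.leb_spec (S i) (Nat.sqrt_up j)); try lia.
      unfold hgt. rewrite Nat.pow_add_r. f_equal. f_equal. lia.
  - intros [k [Hk ->]]. destruct (Nat.leb_spec k (Nat.sqrt_up j)).
    + destruct k. left. lia. right. left. exists (S k). split. lia. lia.
    + right. right. exists (k - 1). split. lia. unfold hgt. rewrite Nat.pow_add_r. reflexivity.
Qed.

Section Pformula.
Variable s : nat -> nat -> nat.
Hypothesis HH : forall n m, H_of rN s hgt n m <-> H_set n m.

Lemma P_H j m : H_of rN s hgt j m <-> exists k, k <= S j /\ m = Pk s j k.
Proof.
  unfold H_of, rN. split.
  - intros [->|[i [Hi ->]]]. exists 0. split. lia. reflexivity.
    exists (S i). split. lia. reflexivity.
  - intros [k [Hk ->]]. destruct k. left. reflexivity. right. exists k. split. lia. reflexivity.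
Qed.

Lemma Pk_strict j k : Pk s j k < Pk s j (S k).
Proof. rewrite Pk_S. pose proof (hgt_pos j). lia. Qed.

Lemma P_eq_phi j k : k <= S j -> Pk s j k = phi j k.
Proof.
  induction k as [k IH] using lt_wf_ind. intros Hk.
  assert (A : exists k', k' <= S j /\ Pk s j k = phi j k').
  { apply phi_H, HH, P_H. eauto. }
  assert (B : exists k', k' <= S j /\ phi j k = Pk s j k').
  { apply P_H, HH, phi_H. eauto. }
  destruct A as [k1 [Hk1 E1]]. destruct B as [k2 [Hk2 E2]].
  assert (Pm : forall a b, a < b -> Pk s j a < Pk s j b).
  { intros a b Hab. apply (strict_mono (Pk s j) b); auto. intros; apply Pk_strict. }
  assert (Fm : forall a b, a < b -> b <= S j -> phi j a < phi j b).
  { intros a b Hab Hb. unfold phi. pose proof (psi_lt j a b Hab Hb). pose proof (hgt_pos j). nia. }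
  destruct (Nat.lt_trichotomy k1 k) as [L|[L|L]].
  - rewrite <- IH in E1 by lia. pose proof (Pm k1 k L). lia.
  - subst; auto.
  - destruct (Nat.lt_trichotomy k2 k) as [L2|[L2|L2]].
    + rewrite (IH k2 L2 ltac:(lia)) in E2. pose proof (Fm k2 k L2 Hk). lia.
    + subst. pose proof (Fm k k1 L Hk1). lia.
    + pose proof (Fm k k1 L Hk1). pose proof (Pm k k2 L2). lia.
Qed.

End Pformula.

Lemma pow_diff_inj a a' b b' : a < a' -> b < b' -> 5 ^ a' + 5 ^ b = 5 ^ b' + 5 ^ a -> a = b.
Proof.
  intros Ha Hb E.
  assert (Hmono : forall x y, x <= y -> 5 ^ x <= 5 ^ y) by (intros; apply Nat.pow_le_mono_r; lia).
  destruct (Nat.lt_trichotomy a' b') as [L|[L|L]].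
  - exfalso. replace b' with (S (b' - 1)) in E by lia. rewrite Nat.pow_succ_r' in E.
    assert (5 ^ a' <= 5 ^ (b' - 1)) by (apply Hmono; lia). assert (5 ^ b <= 5 ^ (b' - 1)) by (apply Hmono; lia).
    pose proof (Nat.pow_nonzero 5 (b'-1) ltac:(lia)). lia.
  - subst. assert (5 ^ b = 5 ^ a) by lia. apply Nat.pow_inj_r in H; lia.
  - exfalso. replace a' with (S (a' - 1)) in E by lia. rewrite Nat.pow_succ_r' in E.
    assert (5 ^ b' <= 5 ^ (a' - 1)) by (apply Hmono; lia). assert (5 ^ a <= 5 ^ (a' - 1)) by (apply Hmono; lia).
    pose proof (Nat.pow_nonzero 5 (a'-1) ltac:(lia)). lia.
Qed.

Definition pc (j D : nat) : nat :=
  list_sum (map (fun k => list_sum (map (fun k' => if psi j k' =? psi j k + D then 1 else 0) (seq 0 (j + 2)))) (seq 0 (j + 2))).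

Lemma pc_bound j D : 1 <= D -> pc j D <= Nat.sqrt_up j + 2.
Proof.
  intros HD. unfold pc. set (c := Nat.sqrt_up j). pose proof (sqrt_up_le j).
  set (inner := fun k => list_sum (map (fun k' => if psi j k' =? psi j k + D then 1 else 0) (seq 0 (j + 2)))).
  fold inner.
  assert (Hin : forall k, inner k <= 1).
  { intros k. apply ls_le_one. intros; destruct (_ =? _); lia.
    intros x y Hx Hy E1 E2. apply in_seq in Hx, Hy.
    destruct (Nat.eqb_spec (psi j x) (psi j k + D)); destruct (Nat.eqb_spec (psi j y) (psi j k + D)); try lia.
    apply (psi_inj j); lia. apply seq_NoDup. }
  replace (seq 0 (j + 2)) with (seq 0 (S c) ++ seq (S c) (j + 1 - c)) at 1.
  2:{ rewrite <- seq_app. f_equal. lia. }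
  rewrite ls_app.
  assert (list_sum (map inner (seq 0 (S c))) <= S c).
  { eapply Nat.le_trans. apply (ls_le inner (fun _ => 1)). intros; apply Hin. rewrite ls_const, length_seq. lia. }
  assert (list_sum (map inner (seq (S c) (j + 1 - c))) <= 1).
  { apply ls_le_one. intros; apply Hin. 2: apply seq_NoDup.
    intros x y Hx Hy Ex Ey. apply in_seq in Hx, Hy.
    destruct (ls_nonzero _ _ Ex) as [x' [Hx' Ex']]. destruct (ls_nonzero _ _ Ey) as [y' [Hy' Ey']].
    apply in_seq in Hx', Hy'.
    destruct (Nat.eqb_spec (psi j x') (psi j x + D)) as [Ex2|]; [|lia].
    destruct (Nat.eqb_spec (psi j y') (psi j y + D)) as [Ey2|]; [|lia].
    assert (x < x'). { destruct (Nat.le_gt_cases x' x); auto. destruct (Nat.eq_dec x' x). subst. lia.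
      pose proof (psi_lt j x' x ltac:(lia) ltac:(lia)). lia. }
    assert (y < y'). { destruct (Nat.le_gt_cases y' y); auto. destruct (Nat.eq_dec y' y). subst. lia.
      pose proof (psi_lt j y' y ltac:(lia) ltac:(lia)). lia. }
    unfold psi in Ex2, Ey2. fold c in Ex2, Ey2.
    destruct (Nat.leb_spec x c); try lia. destruct (Nat.leb_spec y c); try lia.
    destruct (Nat.leb_spec x' c); try lia. destruct (Nat.leb_spec y' c); try lia.
    assert (x - 1 = y - 1). { apply (pow_diff_inj (x - 1) (x' - 1) (y - 1) (y' - 1)); lia. }
    lia. }
  lia.
Qed.

Open Scope nat_scope.

Section Pairs.
Variable s : nat -> nat -> nat.
Hypothesis HH : forall n m, H_of rN s hgt n m <-> H_set n m.

Definition qual (j m : nat) (z : Z) (k k' : nat) : nat :=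
  if k =? k' then 0 else if Z.leb (Z.abs (z + Z.of_nat (Pk s j k) - Z.of_nat (Pk s j k'))) (Z.of_nat m) then 1 else 0.

Definition pairsw (j m : nat) (z : Z) : nat :=
  list_sum (map (fun k => list_sum (map (fun k' => qual j m z k k') (seq 0 (rN j)))) (seq 0 (rN j))).

Lemma qual_info j m z k k' : 4 * m <= hgt j -> (0 <= z)%Z -> k < rN j -> k' < rN j -> qual j m z k k' <> 0 ->
  (1 <= Z.of_nat (psi j k') - Z.of_nat (psi j k))%Z /\
  (Z.abs (z - Z.of_nat (hgt j) * (Z.of_nat (psi j k') - Z.of_nat (psi j k))) <= Z.of_nat m)%Z.
Proof.
  intros Hm Hz Hk Hk' Q. unfold qual in Q. unfold rN in *.
  destruct (Nat.eqb_spec k k'); [lia|].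
  destruct (Z.leb_spec (Z.abs (z + Z.of_nat (Pk s j k) - Z.of_nat (Pk s j k'))) (Z.of_nat m)) as [L|]; [|lia].
  rewrite !(P_eq_phi s HH) in L by lia. unfold phi in L. rewrite !Nat2Z.inj_mul in L.
  assert (psi j k <> psi j k') by (intro E; apply (psi_inj j) in E; lia).
  pose proof (hgt_pos j).
  assert (E : (z + Z.of_nat (hgt j) * Z.of_nat (psi j k) - Z.of_nat (hgt j) * Z.of_nat (psi j k') =
              z - Z.of_nat (hgt j) * (Z.of_nat (psi j k') - Z.of_nat (psi j k)))%Z) by ring.
  rewrite E in L. split; auto.
  destruct (Z.le_gt_cases 1 (Z.of_nat (psi j k') - Z.of_nat (psi j k))) as [G|G]; auto.
  assert (Z.of_nat (psi j k') - Z.of_nat (psi j k) <= -1)%Z by lia.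
  exfalso. nia.
Qed.

Lemma pairs_bound j m z : 4 * m <= hgt j -> (0 <= z)%Z ->
  pairsw j m z <= Nat.sqrt_up j + 2 /\
  (pairsw j m z <> 0 -> (3 * Z.of_nat (hgt j) <= 4 * z /\ 4 * z < Z.of_nat (hgt (S j)))%Z).
Proof.
  intros Hm Hz. destruct (Nat.eq_dec (pairsw j m z) 0) as [Z0|NZ].
  - rewrite Z0. split. lia. tauto.
  - destruct (ls_nonzero _ _ NZ) as [k1 [Hk1 E1]]. destruct (ls_nonzero _ _ E1) as [k1' [Hk1' E1']].
    apply in_seq in Hk1, Hk1'.
    destruct (qual_info j m z k1 k1' Hm Hz ltac:(lia) ltac:(lia) E1') as [X1 B1].
    set (X := (Z.of_nat (psi j k1') - Z.of_nat (psi j k1))%Z) in *.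
    pose proof (hgt_pos j).
    assert (Huniq : forall k k', k < rN j -> k' < rN j -> qual j m z k k' <> 0 ->
                 Z.of_nat (psi j k') = (Z.of_nat (psi j k) + X)%Z).
    { intros k k' Hk Hk' Q. destruct (qual_info j m z k k' Hm Hz Hk Hk' Q) as [X2 B2].
      set (Y := (Z.of_nat (psi j k') - Z.of_nat (psi j k))%Z) in *.
      assert (Y = X). { destruct (Z.lt_trichotomy Y X) as [L|[L|L]]; auto; exfalso.
        - assert (X - Y >= 1)%Z by lia. nia.
        - assert (Y - X >= 1)%Z by lia. nia. }
      unfold Y in H0. lia. }
    split.
    + eapply Nat.le_trans. 2: apply (pc_bound j (Z.to_nat X)); lia.
      unfold pairsw, pc. unfold rN. apply ls_le. intros k Hk. apply ls_le. intros k' Hk'.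
      apply in_seq in Hk, Hk'.
      destruct (Nat.eq_dec (qual j m z k k') 0) as [Q|Q]. rewrite Q. lia.
      pose proof (Huniq k k' ltac:(unfold rN; lia) ltac:(unfold rN; lia) Q).
      destruct (Nat.eqb_spec (psi j k') (psi j k + Z.to_nat X)); [|lia].
      unfold qual. destruct (_ =? _). lia. destruct (Z.leb _ _); lia.
    + intros _. rewrite hgt_S5. rewrite Nat2Z.inj_mul.
      assert (psi j k1' <= 5 ^ j) by (apply psi_le_last; unfold rN in *; lia).
      assert (E5 : Z.of_nat (5 ^ S j) = (5 * Z.of_nat (5 ^ j))%Z) by (rewrite Nat.pow_succ_r', Nat2Z.inj_mul; lia).
      rewrite E5.
      assert (X <= Z.of_nat (5 ^ j))%Z by (unfold X; lia).
      assert (4 * m < hgt j * 5 ^ j).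
      { destruct j. simpl in *. unfold hgt, e_exp in *; simpl in *. lia.
        assert (5 <= 5 ^ S j) by (rewrite Nat.pow_succ_r'; pose proof (Nat.pow_nonzero 5 j ltac:(lia)); lia). nia. }
      split; nia.
Qed.

End Pairs.

Open Scope nat_scope.

Lemma NoDup_flat_map_seq {A} (B : nat -> list A) r :
  (forall k, k < r -> NoDup (B k)) ->
  (forall k1 k2 x, k1 < k2 -> k2 < r -> In x (B k1) -> In x (B k2) -> False) ->
  NoDup (flat_map B (seq 0 r)).
Proof.
  induction r; intros H1 H2. constructor.
  rewrite seq_S, flat_map_app. simpl. rewrite app_nil_r.
  apply NoDup_app. apply IHr. intros; apply H1; lia. intros k1 k2 x Q1 Q2 Q3 Q4; eapply (H2 k1 k2 x); eauto; lia. apply H1; lia.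
  intros x Hx Hx2. apply in_flat_map in Hx. destruct Hx as [k [Hk Hk2]]. apply in_seq in Hk.
  eapply (H2 k r x); eauto; lia.
Qed.

Definition cz (L : list nat) (z : Z) : nat :=
  list_sum (map (fun a => list_sum (map (fun b => if Z.eqb (Z.of_nat b) (Z.of_nat a + z) then 1 else 0) L)) L).

Lemma cz_le_len L z : NoDup L -> cz L z <= length L.
Proof.
  intros ND. unfold cz. eapply Nat.le_trans. apply (ls_le _ (fun _ => 1)).
  - intros a Ha. apply ls_le_one; auto. intros; destruct (Z.eqb _ _); lia.
    intros x y _ _ Ex Ey. destruct (Z.eqb_spec (Z.of_nat x) (Z.of_nat a + z)); destruct (Z.eqb_spec (Z.of_nat y) (Z.of_nat a + z)); lia.
  - rewrite ls_const. lia.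
Qed.

Lemma cz_zero L z m : (forall g, In g L -> g <= m) -> (Z.of_nat m < Z.abs z)%Z -> cz L z = 0.
Proof.
  intros Hb Hz. unfold cz. rewrite (ls_ext _ (fun _ => 0)). rewrite ls_const. lia.
  intros a Ha. rewrite (ls_ext _ (fun _ => 0)). rewrite ls_const. lia.
  intros b Hb2. pose proof (Hb a Ha). pose proof (Hb _ Hb2). destruct (Z.eqb_spec (Z.of_nat b) (Z.of_nat a + z)); lia.
Qed.

Section Glists.
Variable s : nat -> nat -> nat.
Hypothesis Hsum : forall n, list_sum (map (fun k => hgt n + s n k)%nat (seq 0 (rN n))) = hgt (S n).
Hypothesis HH : forall n m, H_of rN s hgt n m <-> H_set n m.
Variable n0 : nat.

Definition G (d : nat) : list nat := map fst (Gl s n0 d).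

Lemma G_S d : G (S d) = flat_map (fun k => map (fun g => Pk s (n0 + d) k + g) (G d)) (seq 0 (rN (n0 + d))).
Proof. unfold G. simpl. rewrite map_flat_map'. apply flat_map_ext. intros k. rewrite !map_map. reflexivity. Qed.

Lemma G_len d : length (G d) = Rr n0 d.
Proof.
  induction d. reflexivity. rewrite G_S. rewrite (flat_map_constant_length (c := length (G d))).
  rewrite length_seq. simpl. lia. intros. rewrite length_map. auto.
Qed.

Definition mb (d : nat) : nat := psum (fun i => 5 ^ (e_exp (n0 + i) + (n0 + i))) d.

Lemma G_bound d g : In g (G d) -> g <= mb d.
Proof.
  revert g. induction d; intros g Hg.
  - unfold G in Hg. simpl in Hg. destruct Hg as [<-|[]]. simpl. lia.
  - rewrite G_S in Hg. apply in_flat_map in Hg. destruct Hg as [k [Hk Hg]]. apply in_seq in Hk.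
    apply in_map_iff in Hg. destruct Hg as [g0 [<- Hg0]].
    unfold mb. rewrite psum_S. fold (mb d). specialize (IHd g0 Hg0).
    pose proof (Pk_mono s (n0 + d) k (S (n0 + d)) ltac:(unfold rN in Hk; lia)).
    pose proof (Pk_last s HH (n0 + d)). lia.
Qed.

Lemma mb_bound d : 4 * mb d <= hgt (n0 + d).
Proof.
  induction d.
  - unfold mb. simpl. lia.
  - unfold mb. rewrite psum_S. fold (mb d). rewrite Nat.add_succ_r, hgt_S5.
    rewrite Nat.pow_add_r. fold (hgt (n0 + d)). rewrite Nat.pow_succ_r'.
    pose proof (Nat.pow_nonzero 5 (n0 + d) ltac:(lia)). nia.
Qed.

Lemma mb_lt d : mb d < hgt (n0 + d).
Proof. pose proof (mb_bound d). pose proof (hgt_pos (n0 + d)). lia. Qed.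

Lemma G_nodup d : NoDup (G d).
Proof.
  induction d. unfold G. simpl. constructor. simpl; auto. constructor.
  rewrite G_S. apply NoDup_flat_map_seq.
  - intros k Hk. apply NoDup_map_NoDup_ForallPairs; auto. intros x y _ _ E. lia.
  - intros k1 k2 x Hk Hk2 H1 H2. apply in_map_iff in H1, H2.
    destruct H1 as [g1 [<- Hg1]]. destruct H2 as [g2 [E Hg2]].
    pose proof (G_bound d g1 Hg1). pose proof (mb_lt d).
    pose proof (Pk_lt s (n0 + d) k1 k2 Hk). lia.
Qed.

Lemma cz_S d z : cz (G (S d)) z <=
  rN (n0 + d) * cz (G d) z + length (G d) * pairsw s (n0 + d) (mb d) z.
Proof.
  set (j := n0 + d). set (P := Pk s j). set (L := G d).
  assert (E : cz (G (S d)) z = list_sum (map (fun k => list_sum (map (fun k' => cz L (z + Z.of_nat (P k) - Z.of_nat (P k'))%Z) (seq 0 (rN j)))) (seq 0 (rN j)))).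
  { unfold cz. rewrite G_S. fold j. fold L. rewrite ls_flat_map. apply ls_ext. intros k Hk.
    rewrite map_map.
    transitivity (list_sum (map (fun a => list_sum (map (fun k' => list_sum (map (fun b =>
       if Z.eqb (Z.of_nat b) (Z.of_nat a + (z + Z.of_nat (P k) - Z.of_nat (P k')))%Z then 1 else 0) L)) (seq 0 (rN j)))) L)).
    { apply ls_ext. intros a Ha. rewrite ls_flat_map. apply ls_ext. intros k' Hk'. rewrite map_map. apply ls_ext. intros b Hb.
      fold P. rewrite !Nat2Z.inj_add.
      destruct (Z.eqb_spec (Z.of_nat (P k') + Z.of_nat b) (Z.of_nat (P k) + Z.of_nat a + z));
      destruct (Z.eqb_spec (Z.of_nat b) (Z.of_nat a + (z + Z.of_nat (P k) - Z.of_nat (P k')))); lia. }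
    rewrite ls_swap. reflexivity. }
  rewrite E.
  eapply Nat.le_trans.
  - apply ls_le. intros k Hk. apply (ls_le _ (fun k' => (if k' =? k then 1 else 0) * cz L z + qual s j (mb d) z k k' * length L)).
    intros k' Hk'. unfold qual. destruct (Nat.eqb_spec k' k).
    + subst. rewrite Nat.eqb_refl. replace (z + Z.of_nat (P k) - Z.of_nat (P k))%Z with z by lia. lia.
    + destruct (Nat.eqb_spec k k'); [lia|]. fold P.
      destruct (Z.leb_spec (Z.abs (z + Z.of_nat (P k) - Z.of_nat (P k'))) (Z.of_nat (mb d))).
      * pose proof (cz_le_len L (z + Z.of_nat (P k) - Z.of_nat (P k'))%Z (G_nodup d)). unfold L in *. lia.
      * rewrite (cz_zero L _ (mb d)); [lia | apply G_bound | lia].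
  - apply Nat.eq_le_incl. unfold pairsw. fold j.
    rewrite (ls_ext _ (fun k => cz L z + list_sum (map (fun k' => qual s j (mb d) z k k') (seq 0 (rN j))) * length L)).
    + rewrite ls_plus, ls_const, length_seq, ls_mul_r. lia.
    + intros k Hk. apply in_seq in Hk. rewrite ls_plus, !ls_mul_r. rewrite ls_ind_eq by lia. rewrite Nat.mul_1_l. reflexivity.
Qed.

End Glists.

Open Scope R_scope.

Lemma sqrt_ratio (delta : R) : 0 < delta -> exists J1, forall j, (J1 <= j)%nat ->
  INR (Nat.sqrt_up j + 2) <= delta * INR (j + 2).
Proof.
  intros Hd. destruct (INR_archimed delta 4 Hd) as [K0 HK0].
  set (K := S K0). assert (HK : 4 <= INR K * delta). { unfold K. rewrite S_INR. lra. }
  exists (K * K)%nat. intros j Hj.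
  set (t := Nat.sqrt j). assert (Kt : (K <= t)%nat) by (apply Nat.sqrt_le_square; lia).
  pose proof (Nat.le_sqrt_up_succ_sqrt j). pose proof (Nat.sqrt_spec j ltac:(lia)). fold t in H, H0.
  assert (A : (Nat.sqrt_up j + 2 <= 4 * t)%nat) by (unfold K in Kt; lia).
  assert (B : (K * t <= j + 2)%nat) by nia.
  apply le_INR in A, B. rewrite mult_INR in A, B. simpl in A.
  replace (INR 4) with 4 in A by (simpl; lra).
  pose proof (pos_INR t). nra.
Qed.

Lemma rs_one (t : nat -> R) B n : (forall i, 0 <= t i <= B) -> (forall i1 i2, t i1 <> 0 -> t i2 <> 0 -> i1 = i2) -> 0 <= B ->
  rs t n <= B.
Proof.
  intros H1 H2 HB. induction n. simpl. lra.
  simpl. destruct (Req_dec (t n) 0) as [E|E]. rewrite E. lra.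
  assert (rs t n = 0).
  { transitivity (rs (fun _ => 0) n). apply rs_ext. intros i Hi. destruct (Req_dec (t i) 0); auto.
    specialize (H2 i n H E). lia. rewrite rs_const. lra. }
  rewrite H. specialize (H1 n). lra.
Qed.

Lemma hgt_mono a b : (a <= b)%nat -> (hgt a <= hgt b)%nat.
Proof. induction 1. lia. rewrite hgt_S5. pose proof (Nat.pow_nonzero 5 (S m) ltac:(lia)). nia. Qed.

Section RatioC.
Variable s : nat -> nat -> nat.
Hypothesis Hsum : forall n, list_sum (map (fun k => hgt n + s n k)%nat (seq 0 (rN n))) = hgt (S n).
Hypothesis HH : forall n m, H_of rN s hgt n m <-> H_set n m.
Variable n0 : nat.

Definition rho (d : nat) (z : Z) : R := INR (cz (G s n0 d) z) / INR (length (G s n0 d)).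

Lemma lenG_pos d : 0 < INR (length (G s n0 d)).
Proof. rewrite G_len. apply lt_0_INR. apply Rr_pos. Qed.

Lemma rho_S d z : rho (S d) z <= rho d z + INR (pairsw s (n0 + d) (mb n0 d) z) / INR (rN (n0 + d)).
Proof.
  unfold rho. pose proof (cz_S s HH n0 d z) as H. apply le_INR in H.
  rewrite plus_INR, !mult_INR in H.
  assert (E : length (G s n0 (S d)) = (rN (n0 + d) * length (G s n0 d))%nat) by (rewrite !G_len; simpl; lia).
  rewrite E, mult_INR. pose proof (lenG_pos d). pose proof (INR_rN_pos (n0 + d)).
  set (c1 := INR (cz (G s n0 (S d)) z)) in *. set (c0 := INR (cz (G s n0 d) z)) in *.
  set (l := INR (length (G s n0 d))) in *. set (r := INR (rN (n0 + d))) in *.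
  set (p := INR (pairsw s (n0 + d) (mb n0 d) z)) in *.
  replace (c0 / l + p / r) with ((r * c0 + l * p) / (r * l)) by (field; lra).
  apply Rmult_le_compat_r. left. apply Rinv_0_lt_compat. nra. lra.
Qed.

Lemma rho_0 z : z <> 0%Z -> rho 0 z = 0.
Proof.
  intros Hz. unfold rho, cz, G. simpl. destruct z; try lia; simpl; lra.
Qed.

Lemma rho_sum d z : z <> 0%Z -> rho d z <= rs (fun i => INR (pairsw s (n0 + i) (mb n0 i) z) / INR (rN (n0 + i))) d.
Proof.
  intros Hz. induction d. rewrite rho_0; auto. simpl. lra.
  pose proof (rho_S d z). simpl rs. lra.
Qed.

Lemma lemmaC (delta : R) : 0 < delta -> exists Z0 : nat, forall z d, (Z.of_nat Z0 <= z)%Z -> rho d z <= delta.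
Proof.
  intros Hd. destruct (sqrt_ratio delta Hd) as [J1 HJ1].
  exists (S (hgt J1)). intros z d Hz.
  eapply Rle_trans. apply rho_sum. lia.
  apply rs_one; [| |lra].
  - intros i. split.
    + apply Rmult_le_pos. apply pos_INR. left. apply Rinv_0_lt_compat. apply INR_rN_pos.
    + destruct (pairs_bound s HH (n0 + i) (mb n0 i) z (mb_bound n0 i) ltac:(lia)) as [B1 B2].
      destruct (Nat.eq_dec (pairsw s (n0 + i) (mb n0 i) z) 0) as [E|E].
      * rewrite E. simpl. unfold Rdiv. rewrite Rmult_0_l. lra.
      * specialize (B2 E). destruct B2 as [B2 B3].
        assert (J1 <= n0 + i)%nat.
        { destruct (Nat.le_gt_cases J1 (n0 + i)); auto. pose proof (hgt_mono (S (n0 + i)) J1 ltac:(lia)). lia. }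
        specialize (HJ1 (n0 + i)%nat H). apply le_INR in B1.
        pose proof (INR_rN_pos (n0 + i)%nat). unfold rN in *.
        apply Rmult_le_reg_r with (INR (n0 + i + 2)%nat). auto.
        unfold Rdiv. rewrite Rmult_assoc, Rinv_l by lra. lra.
  - intros i1 i2 E1 E2.
    assert (N1 : pairsw s (n0 + i1) (mb n0 i1) z <> 0%nat). { intro E. rewrite E in E1. simpl in E1. unfold Rdiv in E1. rewrite Rmult_0_l in E1. lra. }
    assert (N2 : pairsw s (n0 + i2) (mb n0 i2) z <> 0%nat). { intro E. rewrite E in E2. simpl in E2. unfold Rdiv in E2. rewrite Rmult_0_l in E2. lra. }
    destruct (pairs_bound s HH (n0 + i1) (mb n0 i1) z (mb_bound n0 i1) ltac:(lia)) as [_ B1].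
    destruct (pairs_bound s HH (n0 + i2) (mb n0 i2) z (mb_bound n0 i2) ltac:(lia)) as [_ B2].
    specialize (B1 N1). specialize (B2 N2).
    destruct (Nat.lt_trichotomy i1 i2) as [L|[L|L]]; auto; exfalso.
    + pose proof (hgt_mono (S (n0 + i1)) (n0 + i2) ltac:(lia)). lia.
    + pose proof (hgt_mono (S (n0 + i2)) (n0 + i1) ltac:(lia)). lia.
Qed.

End RatioC.

Open Scope R_scope.

Lemma INR_ls_bound {A} (f : A -> nat) l B : (forall x, In x l -> INR (f x) <= B) -> INR (list_sum (map f l)) <= INR (length l) * B.
Proof.
  induction l; intros H. simpl. lra.
  change (list_sum (map f (a :: l))) with (f a + list_sum (map f l))%nat. change (length (a :: l)) with (S (length l)).
  rewrite plus_INR, S_INR.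
  assert (INR (f a) <= B) by (apply H; simpl; auto). assert (INR (list_sum (map f l)) <= INR (length l) * B) by (apply IHl; intros; apply H; simpl; auto). lra.
Qed.

Lemma Rr_ge n0 d : (d + 1 <= Rr n0 d)%nat.
Proof. induction d. simpl. lia. simpl. unfold rN. nia. Qed.

Lemma Lr_mono m d : Lr m <= Lr (m + d).
Proof.
  induction d. rewrite Nat.add_0_r. lra. rewrite Nat.add_succ_r. pose proof (Lr_S (m + d)).
  assert (0 <= Lr (m + d)) by (unfold Lr; apply Rmult_le_pos; [apply pos_INR| left; apply width_pos]). lra.
Qed.

Section Main.
Variable s : nat -> nat -> nat.
Hypothesis Hsum : forall n, list_sum (map (fun k => hgt n + s n k)%nat (seq 0 (rN n))) = hgt (S n).
Hypothesis HH : forall n m, H_of rN s hgt n m <-> H_set n m.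

Definition Jl (n0 d k : nat) : list nat :=
  flat_map (fun g => flat_map (fun j0 => flat_map (fun g' => flat_map (fun j0' =>
    if (g + j0 =? g' + j0' + k)%nat then [(g + j0)%nat] else []) (seq 0 (hgt n0))) (G s n0 d)) (seq 0 (hgt n0))) (G s n0 d).

Lemma Jl_in n0 d k g j0 g' j0' : In g (G s n0 d) -> (j0 < hgt n0)%nat -> In g' (G s n0 d) -> (j0' < hgt n0)%nat ->
  (g + j0 = g' + j0' + k)%nat -> In (g + j0)%nat (Jl n0 d k).
Proof.
  intros. unfold Jl. apply in_flat_map. exists g. split; auto. apply in_flat_map. exists j0. split. apply in_seq; lia.
  apply in_flat_map. exists g'. split; auto. apply in_flat_map. exists j0'. split. apply in_seq; lia.
  rewrite H3, Nat.eqb_refl. rewrite <- H3. simpl; auto.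
Qed.

Lemma Jl_len n0 d k : length (Jl n0 d k) =
  list_sum (map (fun j0 => list_sum (map (fun j0' => cz (G s n0 d) (Z.of_nat j0' + Z.of_nat k - Z.of_nat j0)%Z)
     (seq 0 (hgt n0)))) (seq 0 (hgt n0))).
Proof.
  set (L := G s n0 d). set (h := seq 0 (hgt n0)).
  unfold Jl. fold L h. rewrite length_flat_map.
  set (f := fun g j0 g' j0' => if (g + j0 =? g' + j0' + k)%nat then 1%nat else 0%nat).
  transitivity (list_sum (map (fun g => list_sum (map (fun j0 => list_sum (map (fun g' => list_sum (map (fun j0' => f g j0 g' j0') h)) L)) h)) L)).
  { apply ls_ext. intros g _. rewrite length_flat_map. apply ls_ext. intros j0 _. rewrite length_flat_map.
    apply ls_ext. intros g' _. rewrite length_flat_map. apply ls_ext. intros j0' _. unfold f. destruct (_ =? _)%nat; reflexivity. }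
  rewrite ls_swap. apply ls_ext. intros j0 _.
  transitivity (list_sum (map (fun g => list_sum (map (fun j0' => list_sum (map (fun g' => f g j0 g' j0') L)) h)) L)).
  { apply ls_ext. intros g _. apply ls_swap. }
  rewrite ls_swap. apply ls_ext. intros j0' _. unfold cz. rewrite ls_swap. apply ls_ext. intros g' _.
  apply ls_ext. intros g _. unfold f.
  destruct (Nat.eqb_spec (g + j0) (g' + j0' + k)); destruct (Z.eqb_spec (Z.of_nat g) (Z.of_nat g' + (Z.of_nat j0' + Z.of_nat k - Z.of_nat j0))); lia.
Qed.

Theorem zero_type_main : zero_type rN s.
Proof.
  intros A Apos _ [M0 HA] eps Heps.
  set (delta := eps / 4).
  assert (Hdel : 0 < delta) by (unfold delta; lra).
  destruct (ol_tail A M0 delta HA Hdel) as [R0 HR0].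
  destruct (exists_nat_gt R0) as [n0 Hn0].
  pose proof (Lr_ge n0) as HLn0.
  set (Atail := fun x => A x /\ Lr n0 <= x).
  assert (HAt : outer_le Atail delta).
  { apply ol_mono with (X := fun x => A x /\ R0 <= x) (m := delta); auto. intros y [Ay Hy]. split; auto. lra. lra. }
  set (h0 := hgt n0). set (w0 := width rN n0).
  assert (Hw0 : 0 < w0) by apply width_pos.
  set (dl := delta / (INR (h0 * h0) * w0 + 1)).
  assert (Hdl : 0 < dl). { unfold dl. apply Rdiv_lt_0_compat; auto. pose proof (pos_INR (h0 * h0)). nra. }
  destruct (lemmaC s HH n0 dl Hdl) as [Z0 HZ0].
  exists (Z0 + h0)%nat. intros k Hk.
  destruct (exists_nat_gt (INR k * w0 / delta)) as [d Hd].
  set (N := (n0 + d)%nat).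
  assert (HwN : width rN N = w0 / INR (Rr n0 d)).
  { unfold w0. rewrite (width_Rr n0 d). fold N. pose proof (lt_0_INR _ (Rr_pos n0 d)). field. lra. }
  assert (HRr : INR d + 1 <= INR (Rr n0 d)). { pose proof (Rr_ge n0 d). apply le_INR in H. rewrite plus_INR in H. simpl in H. lra. }
  assert (HRrpos : 0 < INR (Rr n0 d)) by (apply lt_0_INR, Rr_pos).
  set (Bottom := fun y => exists j, In j (seq 0 k) /\ inlev s N j y).
  set (Main := fun y => exists j, In j (Jl n0 d k) /\ inlev s N j y).
  assert (HB : outer_le Bottom delta).
  { eapply ol_mono. apply ol_levels. intros y Hy; exact Hy. rewrite length_seq, HwN.
    apply Rle_trans with (INR k * w0 / INR (Rr n0 d)). right. field. lra.
    apply Rmult_le_reg_r with (INR (Rr n0 d)); auto. unfold Rdiv. rewrite Rmult_assoc, Rinv_l by lra.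
    replace (INR k * w0) with ((INR k * w0 / delta) * delta) by (field; lra).
    pose proof (pos_INR k). assert (0 <= INR k * w0 / delta) by (apply Rmult_le_pos; [nra| left; apply Rinv_0_lt_compat; lra]).
    nra. }
  assert (HT : outer_le (TransE s N k Atail) delta) by (apply ol_trans; auto).
  assert (HM : outer_le Main delta).
  { eapply ol_mono. apply ol_levels. intros y Hy; exact Hy. rewrite Jl_len, HwN.
    set (Gd := G s n0 d).
    assert (Hc : forall j0 j0', In j0 (seq 0 h0) -> In j0' (seq 0 h0) ->
               INR (cz Gd (Z.of_nat j0' + Z.of_nat k - Z.of_nat j0)%Z) <= dl * INR (Rr n0 d)).
    { intros j0 j0' H1 H2. apply in_seq in H1, H2.
      pose proof (HZ0 (Z.of_nat j0' + Z.of_nat k - Z.of_nat j0)%Z d ltac:(unfold h0 in *; lia)) as R.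
      unfold rho in R. rewrite G_len in R. fold Gd in R.
      apply Rmult_le_reg_r with (/ INR (Rr n0 d)). apply Rinv_0_lt_compat; auto.
      rewrite Rmult_assoc, Rinv_r by lra. lra. }
    eapply Rle_trans. apply Rmult_le_compat_r. left. apply Rdiv_lt_0_compat; auto.
    apply INR_ls_bound. intros j0 Hj0. apply INR_ls_bound. intros j0' Hj0'. apply Hc; auto.
    rewrite length_seq. fold h0.
    replace (INR h0 * (INR h0 * (dl * INR (Rr n0 d))) * (w0 / INR (Rr n0 d))) with (INR (h0 * h0) * w0 * dl).
    2:{ rewrite mult_INR. field. lra. }
    unfold dl. pose proof (pos_INR (h0 * h0)).
    replace (INR (h0 * h0) * w0 * (delta / (INR (h0 * h0) * w0 + 1))) with (delta * (INR (h0 * h0) * w0 / (INR (h0 * h0) * w0 + 1))) by (field; nra).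
    assert (INR (h0 * h0) * w0 / (INR (h0 * h0) * w0 + 1) <= 1).
    { apply Rmult_le_reg_r with (INR (h0 * h0) * w0 + 1). nra. unfold Rdiv. rewrite Rmult_assoc, Rinv_l by nra. lra. }
    nra. }
  pose proof (ol_union _ _ _ _ (ol_union _ _ _ _ HAt HB) (ol_union _ _ _ _ HT HM)) as HU.
  eapply ol_mono. apply HU. 2: unfold delta; lra.
  intros y [Ay [x [Ax Hxy]]].
  destruct (Rle_or_lt (Lr n0) y) as [Ly|Ly].
  { left. left. split; auto. }
  assert (HyN : Nat.iter k (T rN s) x < Lr N). { rewrite Hxy. pose proof (Lr_mono n0 d). fold N in H. lra. }
  destruct (Back s Hsum HH N x k (Apos x Ax) HyN) as [j [Hj [Hinj Hcase]]].
  rewrite Hxy in Hinj.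
  destruct Hcase as [Hjk|[Hjk [Hinx Ey]]].
  { left. right. exists j. split; auto. apply in_seq; lia. }
  destruct (Rle_or_lt (Lr n0) x) as [Lx|Lx].
  { right. left. exists j. split; auto. split; auto. exists x. split. split; auto. split; auto. rewrite <- Hxy, Ey. reflexivity. }
  right. right.
  destruct (Mem s Hsum n0 d j y Hinj Ly) as [p [Hp [j0 [Hj0 Ej]]]].
  destruct (Mem s Hsum n0 d (j - k) x Hinx Lx) as [p' [Hp' [j0' [Hj0' Ej']]]].
  exists j. split; auto. rewrite Ej. apply Jl_in with (g' := fst p') (j0' := j0'); auto.
  unfold G. apply in_map; auto. unfold G. apply in_map; auto. lia.
Qed.

End Main.


Open Scope R_scope.

Theorem mainTheorem14 (s : nat -> nat -> nat) :
  (forall n m, H_of rN s hgt n m <-> H_set n m) ->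
  (forall n, list_sum (map (fun k => hgt n + s n k)%nat (seq 0 (rN n))) = hgt (S n)) ->
  zero_type rN s.
Proof.
  intros HH Hsum. exact (zero_type_main s Hsum HH).
Qed.
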